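(* Fix $A\in\mathbb R$ and $T>0$. There is $C=C(A,T)$, not depending on $\epsilon$, such that for all sufficiently small $\epsilon>0$, all $0\le s<t\le\epsilon^{-2}T$, all $x,y\in\mathbb Z_{\ge0}$ and all $v\in[0,1]$, $$|\mathbf p_t^R(x,y)-\mathbf p_s^R(x,y)|\le C\,(1\wedge s^{-1/2-v})\,(t-s)^v.$$
   Context: Let $p_t(x)$, $x\in\mathbb Z$, denote the whole-line semi-discrete heat kernel, i.e. the solution of $\partial_tp_t(x)=\frac12\Delta p_t(x)$, $p_0(x)=1_{\{x=0\}}$, where $\Delta f(x)=f(x+1)+f(x-1)-2f(x)$. For $\epsilon>0$ let $\mu_A=1-A\epsilon$. The half-line Robin heat kernel is, for $t\ge0$ and $x,y\in\mathbb Z_{\ge0}$, $$\mathbf p_t^R(x,y)=p_t(x-y)+\mu_Ap_t(x+y+1)+(1-\mu_A^{-2})\sum_{z=2}^\infty p_t(x+y+z)\mu_A^z.$$ *)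

(* Defs.v *)
From Stdlib Require Import Reals Lra ZArith ClassicalEpsilon.
Open Scope R_scope.

(* The value of a convergent series sum_{n>=0} u n (chosen classically;
   all series used below converge). *)
Definition series (u : nat -> R) : R :=
  epsilon (inhabits 0) (fun l => infinite_sum u l).

(* Whole-line semi-discrete heat kernel, solution of
   d/dt p_t(x) = 1/2 (p_t(x+1)+p_t(x-1)-2p_t(x)), p_0(x) = 1_{x=0}:
   p_t(x) = e^{-t} I_{|x|}(t) = e^{-t} sum_k (t/2)^(2k+|x|) / (k! (k+|x|)!). *)
Definition hk (t : R) (x : Z) : R :=
  exp (- t) *
  series (fun k => (t / 2) ^ (2 * k + Z.abs_nat x) /
                   (INR (fact k) * INR (fact (k + Z.abs_nat x)))).

Definition muA (A eps : R) : R := 1 - A * eps.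

Definition robin (A eps t : R) (x y : nat) : R :=
  let mu := muA A eps in
  let X := Z.of_nat x in
  let Y := Z.of_nat y in
  hk t (X - Y)%Z + mu * hk t (X + Y + 1)%Z
  + (1 - / (mu ^ 2)) *
    series (fun n => hk t (X + Y + Z.of_nat (n + 2))%Z * mu ^ (n + 2)).

(* 1 ∧ s^(-1/2 - v), with the convention s^(negative) = +infinity at s = 0. *)
Definition min1_pow (s v : R) : R :=
  if Rle_dec s 0 then 1 else Rmin 1 (Rpower s (- (1/2) - v)).

(* Main.v *)
Require Import Defs.
From Stdlib Require Import Reals Lra Lia ZArith ClassicalEpsilon.
From Stdlib Require Import Ranalysis5.
From Coquelicot Require Import Coquelicot.
Open Scope R_scope.

Lemma series_eq u : ex_series u -> series u = Series u.
Proof.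
  intros H. unfold series.
  assert (E : exists l, infinite_sum u l).
  { exists (Series u). apply is_series_Reals, Series_correct, H. }
  pose proof (epsilon_spec (inhabits 0) (fun l => infinite_sum u l) E) as H1.
  apply is_series_Reals in H1. symmetry. now apply is_series_unique.
Qed.

Lemma exs_le (a b : nat -> R) : (forall n, Rabs (a n) <= b n) -> ex_series b -> ex_series a.
Proof. intros H Hb. apply (ex_series_le a b); auto. Qed.

Lemma exs_abs (a b : nat -> R) : (forall n, Rabs (a n) <= b n) -> ex_series b ->
  ex_series (fun n => Rabs (a n)).
Proof. intros H Hb. apply (exs_le _ b); auto. intros n; rewrite Rabs_Rabsolu; auto. Qed.

Lemma exs_plus (a b : nat -> R) : ex_series a -> ex_series b -> ex_series (fun n => a n + b n).
Proof. intros. apply (ex_series_plus a b); auto. Qed.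

Lemma exs_scal (c : R) (a : nat -> R) : ex_series a -> ex_series (fun n => c * a n).
Proof. intros. apply (ex_series_scal_l c a); auto. Qed.

Lemma exs_minus (a b : nat -> R) : ex_series a -> ex_series b -> ex_series (fun n => a n - b n).
Proof. intros. apply (ex_series_minus a b); auto. Qed.

Lemma exs_ext (a b : nat -> R) : (forall n, a n = b n) -> ex_series a -> ex_series b.
Proof. intros. apply (ex_series_ext a b); auto. Qed.

Lemma exs_shift (a : nat -> R) k : ex_series a -> ex_series (fun n => a (k + n)%nat).
Proof. intros H. apply (ex_series_incr_n a k); auto. Qed.

Lemma exs_shift1 (a : nat -> R) : ex_series a -> ex_series (fun n => a (S n)).
Proof. intros H. apply (ex_series_incr_1 a); auto. Qed.

Lemma exs_unshift1 (a : nat -> R) : ex_series (fun n => a (S n)) -> ex_series a.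
Proof. intros H. apply (ex_series_incr_1 a); auto. Qed.

Lemma exs_geom (x : R) : 0 <= x < 1 -> ex_series (fun n => x ^ n).
Proof. intros. apply ex_series_geom. rewrite Rabs_pos_eq; lra. Qed.

Lemma Series_nonneg (a : nat -> R) : ex_series a -> (forall n, 0 <= a n) -> 0 <= Series a.
Proof.
  intros E H.
  replace 0 with (Series (fun _ => 0)).
  + apply Series_le; auto. intros n; split; [lra|auto].
  + apply is_series_unique. apply is_series_Reals.
    intros e He. exists O. intros n _. unfold R_dist.
    replace (sum_f_R0 (fun _ => 0) n) with 0. rewrite Rminus_0_r, Rabs_R0; lra.
    induction n; simpl; lra.
Qed.

Lemma sum_nonneg (a : nat -> R) N : (forall n, 0 <= a n) -> 0 <= sum_f_R0 a N.
Proof. intros H; induction N; simpl; auto. specialize (H (S N)); lra. Qed.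

Lemma term_le_sum (a : nat -> R) N : (forall n, 0 <= a n) -> a N <= sum_f_R0 a N.
Proof. intros H; destruct N; simpl. lra. pose proof (sum_nonneg a N H); lra. Qed.

Lemma sum_le_Series (a : nat -> R) N : ex_series a -> (forall n, 0 <= a n) ->
  sum_f_R0 a N <= Series a.
Proof.
  intros E H. rewrite (Series_incr_n a (S N)); [|lia|auto]. simpl pred.
  assert (0 <= Series (fun k => a (S N + k)%nat)).
  { apply Series_nonneg; auto. apply exs_shift; auto. }
  lra.
Qed.

Lemma term_le_Series (a : nat -> R) N : ex_series a -> (forall n, 0 <= a n) ->
  a N <= Series a.
Proof. intros. eapply Rle_trans. apply term_le_sum; auto. apply sum_le_Series; auto. Qed.

Lemma tail_le_Series (a : nat -> R) k : ex_series a -> (forall n, 0 <= a n) ->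
  Series (fun n => a (k + n)%nat) <= Series a.
Proof.
  intros E H. destruct k.
  - simpl. right. apply Series_ext; auto.
  - rewrite (Series_incr_n a (S k)); [|lia|auto]. simpl pred.
    pose proof (sum_nonneg a k H). lra.
Qed.

Lemma Series_le_bound (a : nat -> R) B : ex_series a -> (forall N, sum_f_R0 a N <= B) ->
  Series a <= B.
Proof.
  intros E H. pose proof (Series_correct a E) as C. apply is_series_Reals in C.
  destruct (Rle_dec (Series a) B) as [|n]; auto. exfalso.
  destruct (C (Series a - B)) as [N HN]; [lra|].
  specialize (HN N (le_n _)). specialize (H N). unfold R_dist in HN.
  apply Rabs_def2 in HN. lra.
Qed.

Lemma Series_abs_le (a b : nat -> R) : (forall n, Rabs (a n) <= b n) -> ex_series b ->
  Rabs (Series a) <= Series b.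
Proof.
  intros H E. eapply Rle_trans. apply Series_Rabs. eapply exs_abs; eauto.
  apply Series_le; auto. intros n; split; auto. apply Rabs_pos.
Qed.

Lemma Series_shift1 (a : nat -> R) : ex_series a -> Series a = a O + Series (fun n => a (S n)).
Proof. apply Series_incr_1. Qed.

Lemma telescope (u : nat -> R) k : is_lim_seq u 0 ->
  Series (fun j => u (k + j)%nat - u (S (k + j))) = u k.
Proof.
  intros L. apply is_lim_seq_Reals in L. apply is_series_unique, is_series_Reals.
  assert (Hs : forall n, sum_f_R0 (fun j => u (k + j)%nat - u (S (k + j))) n = u k - u (S (k + n))).
  { induction n; simpl. rewrite Nat.add_0_r; lra. rewrite IHn. replace (k + S n)%nat with (S (k+n)) by lia. lra. }
  intros e He. destruct (L e He) as [N HN]. exists N. intros n Hn. rewrite Hs.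
  unfold R_dist in *. specialize (HN (S (k+n))%nat ltac:(lia)).
  rewrite Rminus_0_r in HN. replace (u k - u (S (k + n)) - u k) with (- u (S (k+n))) by ring.
  rewrite Rabs_Ropp; auto.
Qed.

Lemma exp_Series x : exp x = Series (fun i => / INR (fact i) * x ^ i).
Proof. symmetry. apply is_series_unique, is_series_Reals. exact (proj2_sig (exist_exp x)). Qed.

Lemma exp_ex x : ex_series (fun i => / INR (fact i) * x ^ i).
Proof. exists (exp x). apply is_series_Reals. exact (proj2_sig (exist_exp x)). Qed.

Lemma pow_fact_le x j : 0 <= x -> x ^ j / INR (fact j) <= exp x.
Proof.
  intros Hx. rewrite exp_Series.
  replace (x ^ j / INR (fact j)) with (/ INR (fact j) * x ^ j) by (unfold Rdiv; ring).
  apply (term_le_Series (fun i => / INR (fact i) * x ^ i)). apply exp_ex.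
  intros n. apply Rmult_le_pos. left; apply Rinv_0_lt_compat, INR_fact_lt_0. apply pow_le; auto.
Qed.
Definition q (l : R) (k : nat) : R := exp (- l) * l ^ k / INR (fact k).

Lemma q_nonneg l k : 0 <= l -> 0 <= q l k.
Proof.
  intros H. unfold q. apply Rmult_le_pos. apply Rmult_le_pos. left; apply exp_pos. apply pow_le; auto.
  left; apply Rinv_0_lt_compat, INR_fact_lt_0.
Qed.

Lemma q_S l k : INR (S k) * q l (S k) = l * q l k.
Proof.
  unfold q. rewrite fact_simpl, mult_INR. simpl pow.
  pose proof (INR_fact_lt_0 k). pose proof (lt_0_INR (S k) ltac:(lia)).
  field. lra.
Qed.

Lemma q_geom l j : Rabs (q l j) <= exp (5 * Rabs l) * (/ 4) ^ j.
Proof.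
  unfold q, Rdiv. pose proof (INR_fact_lt_0 j).
  rewrite Rabs_mult, Rabs_mult, Rabs_pos_eq by (left; apply exp_pos).
  rewrite Rabs_inv, (Rabs_pos_eq (INR _)) by lra. rewrite <- RPow_abs.
  pose proof (pow_fact_le (4 * Rabs l) j ltac:(pose proof (Rabs_pos l); lra)) as H1.
  rewrite Rpow_mult_distr in H1.
  replace (5 * Rabs l) with (Rabs l + 4 * Rabs l) by ring. rewrite exp_plus.
  assert (exp (- l) <= exp (Rabs l)).
  { assert (h : -l <= Rabs l) by (rewrite <- Rabs_Ropp; apply Rle_abs).
    destruct h as [h|h]. left; apply exp_increasing; auto. rewrite h; lra. }
  assert (E4 : 0 < 4 ^ j) by (apply pow_lt; lra).
  assert (Hb : Rabs l ^ j / INR (fact j) <= exp (4 * Rabs l) * (/ 4) ^ j).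
  { rewrite pow_inv. apply (Rmult_le_reg_r (4 ^ j)); auto. field_simplify; try lra. }
  replace (exp (- l) * Rabs l ^ j * / INR (fact j)) with (exp (-l) * (Rabs l ^ j / INR (fact j))) by (unfold Rdiv; ring).
  rewrite Rmult_assoc. apply Rmult_le_compat; auto. left; apply exp_pos.
  apply Rmult_le_pos. apply pow_le, Rabs_pos. left; apply Rinv_0_lt_compat; lra.
Qed.

Lemma geom_ex c : ex_series (fun n => c * (/ 4) ^ n).
Proof. apply exs_scal, exs_geom; lra. Qed.

Lemma q_ex l : ex_series (q l).
Proof. apply (exs_le _ (fun n => exp (5 * Rabs l) * (/ 4) ^ n)). apply q_geom. apply geom_ex. Qed.

Lemma q_sum l : Series (q l) = 1.
Proof.
  unfold q. rewrite (Series_ext _ (fun n => exp (- l) * (/ INR (fact n) * l ^ n))).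
  rewrite Series_scal_l, <- exp_Series, <- exp_plus. replace (-l + l) with 0 by ring. apply exp_0.
  intros n; unfold Rdiv; ring.
Qed.

Lemma jq_ex l : ex_series (fun j => INR j * q l j).
Proof.
  apply exs_unshift1. apply (exs_ext (fun j => l * q l j)). intros j; rewrite q_S; auto.
  apply exs_scal, q_ex.
Qed.

Lemma jq_sum l : Series (fun j => INR j * q l j) = l.
Proof.
  rewrite Series_shift1 by apply jq_ex. simpl INR. rewrite Rmult_0_l, Rplus_0_l.
  rewrite (Series_ext _ (fun j => l * q l j)) by (intros; apply q_S).
  rewrite Series_scal_l, q_sum; ring.
Qed.

Lemma j2q_ex l : ex_series (fun j => INR j ^ 2 * q l j).
Proof.
  apply exs_unshift1. apply (exs_ext (fun j => l * (INR j * q l j) + l * q l j)).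
  intros j. replace (INR (S j) ^ 2 * q l (S j)) with (INR (S j) * (INR (S j) * q l (S j))) by ring.
  rewrite q_S, S_INR; ring.
  apply exs_plus; apply exs_scal. apply jq_ex. apply q_ex.
Qed.

Lemma j2q_sum l : Series (fun j => INR j ^ 2 * q l j) = l * l + l.
Proof.
  rewrite Series_shift1 by apply j2q_ex. replace (INR 0 ^ 2 * q l 0) with 0 by (simpl; ring). rewrite Rplus_0_l.
  rewrite (Series_ext _ (fun j => l * (INR j * q l j) + l * q l j)).
  rewrite Series_plus, !Series_scal_l, jq_sum, q_sum. ring.
  apply exs_scal, jq_ex. apply exs_scal, q_ex.
  intros j. replace (INR (S j) ^ 2 * q l (S j)) with (INR (S j) * (INR (S j) * q l (S j))) by ring.
  rewrite q_S, S_INR; ring.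
Qed.

Lemma var_ex l : ex_series (fun j => q l j * (INR j - l) ^ 2).
Proof.
  apply (exs_ext (fun j => INR j ^ 2 * q l j + (-2 * l) * (INR j * q l j) + (l * l) * q l j)).
  intros; ring. apply exs_plus. apply exs_plus. apply j2q_ex. apply exs_scal, jq_ex. apply exs_scal, q_ex.
Qed.

Lemma var_sum l : Series (fun j => q l j * (INR j - l) ^ 2) = l.
Proof.
  rewrite (Series_ext _ (fun j => (INR j ^ 2 * q l j + (-2 * l) * (INR j * q l j)) + (l * l) * q l j)).
  rewrite Series_plus, Series_plus, !Series_scal_l, j2q_sum, jq_sum, q_sum. ring.
  apply j2q_ex. apply exs_scal, jq_ex. apply exs_plus. apply j2q_ex. apply exs_scal, jq_ex. apply exs_scal, q_ex.
  intros; ring.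
Qed.

Definition nq l k := q l (S k) - q l k.
Definition dq l k := q l (S (S k)) - 2 * q l (S k) + q l k.

Lemma q_prev l k : 0 < l -> q l k = INR (S k) * q l (S k) / l.
Proof. intros H. rewrite q_S. field. lra. Qed.

Lemma q_le1 l k : 0 <= l -> q l k <= 1.
Proof. intros H. rewrite <- (q_sum l). apply term_le_Series. apply q_ex. intros; apply q_nonneg; auto. Qed.

Lemma abs_amgm x s : 0 < s -> Rabs x <= x ^ 2 / (2 * s) + s / 2.
Proof.
  intros Hs. apply (Rmult_le_reg_l (2 * s)). lra.
  replace (2 * s * (x ^ 2 / (2 * s) + s / 2)) with (x ^ 2 + s ^ 2) by (field; lra).
  pose proof (Rabs_pos x). assert (x ^ 2 = Rabs x ^ 2) by (unfold Rabs; destruct Rcase_abs; ring).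
  rewrite H0. pose proof (pow2_ge_0 (Rabs x - s)). nra.
Qed.

Lemma nq_bound l k : 0 < l ->
  Rabs (nq l k) <= (q l (S k) * (INR (S k) - l) ^ 2 / (2 * sqrt l) + q l (S k) * (sqrt l / 2)) / l.
Proof.
  intros Hl. unfold nq. rewrite (q_prev l k Hl).
  replace (q l (S k) - INR (S k) * q l (S k) / l) with (q l (S k) * (l - INR (S k)) / l) by (field; lra).
  pose proof (q_nonneg l (S k) ltac:(lra)). pose proof (sqrt_lt_R0 l Hl).
  unfold Rdiv. rewrite Rabs_mult, Rabs_mult, (Rabs_pos_eq (q _ _)), (Rabs_pos_eq (/ l)) by (auto; left; apply Rinv_0_lt_compat; lra).
  apply Rmult_le_compat_r. left; apply Rinv_0_lt_compat; lra.
  rewrite <- Rabs_Ropp. replace (- (l - INR (S k))) with (INR (S k) - l) by ring.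
  pose proof (abs_amgm (INR (S k) - l) (sqrt l) H0).
  replace (q l (S k) * (INR (S k) - l) ^ 2 * / (2 * sqrt l) + q l (S k) * (sqrt l * / 2))
    with (q l (S k) * ((INR (S k) - l) ^ 2 / (2 * sqrt l) + sqrt l / 2)) by (field; lra).
  apply Rmult_le_compat_l; auto.
Qed.

Lemma nq_abs_ex l : 0 <= l -> ex_series (fun k => Rabs (nq l k)).
Proof.
  intros Hl. apply (exs_abs _ (fun k => q l (S k) + q l k)).
  intros k; unfold nq. pose proof (q_nonneg l k Hl). pose proof (q_nonneg l (S k) Hl).
  unfold Rabs; destruct Rcase_abs; lra.
  apply exs_plus. apply exs_shift1, q_ex. apply q_ex.
Qed.

Lemma tail1_q l : 0 <= l -> Series (fun k => q l (S k)) <= 1.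
Proof.
  intros Hl. rewrite <- (q_sum l). apply (tail_le_Series (q l) 1). apply q_ex. intros; apply q_nonneg; auto.
Qed.

Lemma tail1_var l : 0 <= l -> Series (fun k => q l (S k) * (INR (S k) - l) ^ 2) <= l.
Proof.
  intros Hl. apply Rle_trans with (Series (fun j => q l j * (INR j - l) ^ 2)); [|rewrite var_sum; lra].
  apply (tail_le_Series (fun j => q l j * (INR j - l) ^ 2) 1). apply var_ex.
  intros; apply Rmult_le_pos. apply q_nonneg; auto. apply pow2_ge_0.
Qed.

Lemma nq_sum_le l : 0 < l -> Series (fun k => Rabs (nq l k)) <= / sqrt l.
Proof.
  intros Hl. pose proof (sqrt_lt_R0 l Hl) as Hs.
  assert (E1 : ex_series (fun k => q l (S k) * (INR (S k) - l) ^ 2)) by (apply (exs_shift1 (fun j => q l j * (INR j - l) ^ 2)), var_ex).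
  assert (E2 : ex_series (fun k => q l (S k))) by (apply exs_shift1, q_ex).
  assert (E : ex_series (fun k => (q l (S k) * (INR (S k) - l) ^ 2 / (2 * sqrt l) + q l (S k) * (sqrt l / 2)) / l)).
  { apply (exs_ext (fun k => (/ (2 * sqrt l) / l) * (q l (S k) * (INR (S k) - l) ^ 2) + (sqrt l / 2 / l) * q l (S k))).
    intros; field; lra. apply exs_plus; apply exs_scal; auto. }
  eapply Rle_trans. apply Series_le; [|exact E]. intros k; split. apply Rabs_pos. apply nq_bound; auto.
  rewrite (Series_ext _ (fun k => (/ (2 * sqrt l) / l) * (q l (S k) * (INR (S k) - l) ^ 2) + (sqrt l / 2 / l) * q l (S k))).
  2: intros; field; lra.
  rewrite Series_plus, !Series_scal_l by (apply exs_scal; auto).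
  pose proof (tail1_var l ltac:(lra)). pose proof (tail1_q l ltac:(lra)).
  assert (0 < / (2 * sqrt l) / l) by (apply Rmult_lt_0_compat; apply Rinv_0_lt_compat; lra).
  assert (0 < sqrt l / 2 / l) by (unfold Rdiv; apply Rmult_lt_0_compat; [|apply Rinv_0_lt_compat]; lra).
  apply Rle_trans with (/ (2 * sqrt l) / l * l + sqrt l / 2 / l * 1).
  apply Rplus_le_compat; apply Rmult_le_compat_l; lra.
  pose proof (sqrt_sqrt l ltac:(lra)).
  right. set (r := sqrt l) in *. rewrite <- H3. field. lra.
Qed.

Lemma nq_sum_le2 l : 0 <= l -> Series (fun k => Rabs (nq l k)) <= 2.
Proof.
  intros Hl. eapply Rle_trans. apply (Series_le _ (fun k => q l (S k) + q l k)).
  intros k; split. apply Rabs_pos. unfold nq. pose proof (q_nonneg l k Hl). pose proof (q_nonneg l (S k) Hl).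
  unfold Rabs; destruct Rcase_abs; lra.
  apply exs_plus. apply exs_shift1, q_ex. apply q_ex.
  rewrite Series_plus, q_sum. pose proof (tail1_q l Hl). lra. apply exs_shift1, q_ex. apply q_ex.
Qed.

Lemma q_lim l : is_lim_seq (q l) 0.
Proof. apply ex_series_lim_0, q_ex. Qed.

Lemma nq_lim l : is_lim_seq (nq l) 0.
Proof.
  unfold nq. replace (Finite 0) with (Finite (0 - 0)) by (f_equal; ring).
  apply is_lim_seq_minus'. apply (is_lim_seq_incr_1 (q l)), q_lim. apply q_lim.
Qed.

Lemma q_sup l k : 0 < l -> q l k <= / sqrt l.
Proof.
  intros Hl. rewrite <- (telescope (q l) k (q_lim l)).
  eapply Rle_trans. apply Rle_abs. eapply Rle_trans. apply (Series_abs_le _ (fun j => Rabs (nq l (k + j)))).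
  intros j. unfold nq. rewrite <- Rabs_Ropp. right; f_equal; ring.
  apply (exs_shift (fun j => Rabs (nq l j)) k), nq_abs_ex; lra.
  eapply Rle_trans. apply (tail_le_Series (fun j => Rabs (nq l j))). apply nq_abs_ex; lra. intros; apply Rabs_pos.
  apply nq_sum_le; auto.
Qed.

Lemma dq_bound l k : 0 < l ->
  Rabs (dq l k) <= q l (S (S k)) * (INR (S (S k)) - l) ^ 2 / l ^ 2 + q l (S k) / l.
Proof.
  intros Hl. unfold dq.
  assert (Hq : q l k = INR (S k) * q l (S k) / l) by (apply q_prev; auto).
  assert (Hq1 : q l (S k) = INR (S (S k)) * q l (S (S k)) / l) by (apply q_prev; auto).
  replace (q l (S (S k)) - 2 * q l (S k) + q l k) with
    (q l (S (S k)) * (INR (S (S k)) - l) ^ 2 / l ^ 2 - q l (S k) / l).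
  2:{ rewrite Hq. rewrite Hq1. rewrite !S_INR. field. lra. }
  pose proof (q_nonneg l (S k) ltac:(lra)). pose proof (q_nonneg l (S (S k)) ltac:(lra)).
  assert (0 <= q l (S (S k)) * (INR (S (S k)) - l) ^ 2 / l ^ 2).
  { unfold Rdiv. apply Rmult_le_pos. apply Rmult_le_pos; auto. apply pow2_ge_0. left; apply Rinv_0_lt_compat, pow_lt; auto. }
  assert (0 <= q l (S k) / l) by (unfold Rdiv; apply Rmult_le_pos; auto; left; apply Rinv_0_lt_compat; auto).
  unfold Rabs; destruct Rcase_abs; lra.
Qed.

Lemma dq_abs_ex l : 0 <= l -> ex_series (fun k => Rabs (dq l k)).
Proof.
  intros Hl. apply (exs_abs _ (fun k => q l (S (S k)) + 2 * q l (S k) + q l k)).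
  intros k; unfold dq. pose proof (q_nonneg l k Hl). pose proof (q_nonneg l (S k) Hl). pose proof (q_nonneg l (S (S k)) Hl).
  unfold Rabs; destruct Rcase_abs; lra.
  apply exs_plus. apply exs_plus. apply (exs_shift (q l) 2), q_ex. apply exs_scal, exs_shift1, q_ex. apply q_ex.
Qed.

Lemma dq_sum_le l : 0 < l -> Series (fun k => Rabs (dq l k)) <= 2 / l.
Proof.
  intros Hl.
  assert (E1 : ex_series (fun k => q l (S (S k)) * (INR (S (S k)) - l) ^ 2)) by
    (apply (exs_shift (fun j => q l j * (INR j - l) ^ 2) 2), var_ex).
  assert (E2 : ex_series (fun k => q l (S k))) by (apply exs_shift1, q_ex).
  eapply Rle_trans. apply (Series_le _ (fun k => (/ l ^ 2) * (q l (S (S k)) * (INR (S (S k)) - l) ^ 2) + (/ l) * q l (S k))).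
  intros k; split. apply Rabs_pos. eapply Rle_trans. apply dq_bound; auto. right; unfold Rdiv; ring.
  apply exs_plus; apply exs_scal; auto.
  rewrite Series_plus, !Series_scal_l by (apply exs_scal; auto).
  assert (Series (fun k => q l (S (S k)) * (INR (S (S k)) - l) ^ 2) <= l).
  { apply Rle_trans with (Series (fun j => q l j * (INR j - l) ^ 2)); [|rewrite var_sum; lra].
    apply (tail_le_Series (fun j => q l j * (INR j - l) ^ 2) 2). apply var_ex.
    intros; apply Rmult_le_pos. apply q_nonneg; lra. apply pow2_ge_0. }
  pose proof (tail1_q l ltac:(lra)).
  assert (0 < / l ^ 2) by (apply Rinv_0_lt_compat, pow_lt; auto).
  assert (0 < / l) by (apply Rinv_0_lt_compat; auto).
  apply Rle_trans with (/ l ^ 2 * l + / l * 1). apply Rplus_le_compat; apply Rmult_le_compat_l; lra.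
  right; field; lra.
Qed.

Lemma nq_sup l k : 0 < l -> Rabs (nq l k) <= 2 / l.
Proof.
  intros Hl. rewrite <- (telescope (nq l) k (nq_lim l)).
  eapply Rle_trans. apply (Series_abs_le _ (fun j => Rabs (dq l (k + j)))).
  intros j. unfold nq, dq. rewrite <- Rabs_Ropp. right; f_equal. simpl; ring.
  apply (exs_shift (fun j => Rabs (dq l j)) k), dq_abs_ex; lra.
  eapply Rle_trans. apply (tail_le_Series (fun j => Rabs (dq l j))). apply dq_abs_ex; lra. intros; apply Rabs_pos.
  apply dq_sum_le; auto.
Qed.

Lemma pow_le_one x n : 0 <= x <= 1 -> x ^ n <= 1.
Proof. intros H. induction n; simpl. lra. pose proof (pow_le x n ltac:(lra)). nra. Qed.

Definition P (t : R) (a : nat) : R := Series (fun k => q (t / 2) k * q (t / 2) (k + a)).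

Lemma qq_bound l k a : Rabs (q l k * q l (k + a)) <= exp (5 * Rabs l) ^ 2 * (/ 4) ^ a * (/ 4) ^ k.
Proof.
  rewrite Rabs_mult. pose proof (q_geom l k). pose proof (q_geom l (k + a)).
  rewrite pow_add in H0.
  assert (0 <= (/4) ^ k <= 1). { split. apply pow_le; lra. apply pow_le_one; lra. }
  assert (0 <= (/4) ^ a) by (apply pow_le; lra).
  pose proof (exp_pos (5 * Rabs l)).
  apply Rle_trans with ((exp (5 * Rabs l) * (/ 4) ^ k) * (exp (5 * Rabs l) * ((/ 4) ^ k * (/ 4) ^ a))).
  apply Rmult_le_compat; auto using Rabs_pos.
  simpl. replace (exp (5 * Rabs l) * (exp (5 * Rabs l) * 1) * (/ 4) ^ a * (/ 4) ^ k) with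
    ((exp (5 * Rabs l) * (/ 4) ^ k) * (exp (5 * Rabs l) * (1 * (/ 4) ^ a))) by ring.
  apply Rmult_le_compat_l. apply Rmult_le_pos; lra.
  apply Rmult_le_compat_l. lra. apply Rmult_le_compat_r; lra.
Qed.

Lemma qq_ex l a : ex_series (fun k => q l k * q l (k + a)).
Proof. apply (exs_le _ (fun k => exp (5 * Rabs l) ^ 2 * (/ 4) ^ a * (/ 4) ^ k)). intros; apply qq_bound. apply geom_ex. Qed.

Lemma hk_P t x : hk t x = P t (Z.abs_nat x).
Proof.
  unfold hk, P. set (a := Z.abs_nat x).
  assert (Ht : forall k, (t / 2) ^ (2 * k + a) / (INR (fact k) * INR (fact (k + a))) =
              exp t * (q (t / 2) k * q (t / 2) (k + a))).
  { intros k. unfold q. replace (2 * k + a)%nat with (k + (k + a))%nat by lia. rewrite pow_add.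
    pose proof (INR_fact_lt_0 k). pose proof (INR_fact_lt_0 (k + a)).
    assert (exp t * (exp (- (t / 2)) * exp (- (t / 2))) = 1).
    { rewrite <- !exp_plus. replace (t + (- (t / 2) + - (t / 2))) with 0 by field. apply exp_0. }
    transitivity (exp t * (exp (- (t / 2)) * exp (- (t / 2))) * ((t / 2) ^ k * (t / 2) ^ (k + a) / (INR (fact k) * INR (fact (k + a))))).
    rewrite H1; ring. field; lra. }
  rewrite series_eq.
  - rewrite (Series_ext _ _ Ht), Series_scal_l, <- Rmult_assoc, <- exp_plus.
    replace (- t + t) with 0 by ring. rewrite exp_0; ring.
  - apply (exs_ext (fun k => exp t * (q (t / 2) k * q (t / 2) (k + a)))). intros; rewrite Ht; auto.
    apply exs_scal, qq_ex.
Qed.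

Lemma P_nonneg t a : 0 <= t -> 0 <= P t a.
Proof.
  intros Ht. apply Series_nonneg. apply qq_ex. intros; apply Rmult_le_pos; apply q_nonneg; lra.
Qed.

Lemma P_le_gen t a B : 0 <= t -> (forall k, q (t / 2) k <= B) -> P t a <= B.
Proof.
  intros Ht HB. unfold P. set (l := t / 2). assert (0 <= l) by (unfold l; lra).
  apply Rle_trans with (Series (fun k => q l k * B)).
  apply Series_le. intros k; split. apply Rmult_le_pos; apply q_nonneg; auto.
  apply Rmult_le_compat_l. apply q_nonneg; auto. auto.
  apply (exs_ext (fun k => B * q l k)). intros; ring. apply exs_scal, q_ex.
  rewrite (Series_ext _ (fun k => B * q l k)) by (intros; ring). rewrite Series_scal_l, q_sum. lra.
Qed.

Lemma P_le1 t a : 0 <= t -> P t a <= 1.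
Proof. intros Ht. apply P_le_gen; auto. intros; apply q_le1; lra. Qed.

Lemma P_le_sqrt t a : 0 < t -> P t a <= / sqrt (t / 2).
Proof. intros Ht. apply P_le_gen; [lra|]. intros; apply q_sup; lra. Qed.

Lemma P_grad_gen t b B1 B2 : 0 <= t -> (forall k, q (t / 2) k <= B1) ->
  Series (fun k => Rabs (nq (t / 2) k)) <= B2 ->
  Rabs (P t (S b) - P t b) <= B1 * B2.
Proof.
  intros Ht H1 H2. unfold P. set (l := t / 2) in *. assert (0 <= l) by (unfold l; lra).
  rewrite <- Series_minus by apply qq_ex.
  assert (0 <= B1) by (apply Rle_trans with (q l 0); auto; apply q_nonneg; auto).
  eapply Rle_trans. apply (Series_abs_le _ (fun k => B1 * Rabs (nq l (b + k)))).
  intros k. replace (k + S b)%nat with (S (b + k)) by lia. replace (k + b)%nat with (b + k)%nat by lia.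
  unfold nq. rewrite <- Rmult_minus_distr_l, Rabs_mult, Rabs_pos_eq by (apply q_nonneg; auto).
  apply Rmult_le_compat_r; auto using Rabs_pos.
  apply exs_scal. apply (exs_shift (fun j => Rabs (nq l j)) b), nq_abs_ex; auto.
  rewrite Series_scal_l. apply Rmult_le_compat_l; auto.
  eapply Rle_trans; [|exact H2]. apply (tail_le_Series (fun j => Rabs (nq l j))). apply nq_abs_ex; auto.
  intros; apply Rabs_pos.
Qed.

Lemma P_grad1 t b : 0 <= t -> Rabs (P t (S b) - P t b) <= 2.
Proof.
  intros Ht. replace 2 with (1 * 2) by ring. apply P_grad_gen; auto. intros; apply q_le1; lra. apply nq_sum_le2; lra.
Qed.

Lemma P_grad2 t b : 0 < t -> Rabs (P t (S b) - P t b) <= / sqrt (t / 2) * / sqrt (t / 2).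
Proof.
  intros Ht. apply P_grad_gen; try lra. intros; apply q_sup; lra. apply nq_sum_le; lra.
Qed.

Lemma deriv_series (F F' : nat -> R -> R) :
  (forall n y, derivable_pt_lim (F n) y (F' n y)) ->
  (forall n y, continuity_pt (F' n) y) ->
  (forall r, 0 < r -> exists M : nat -> R, ex_series M /\
      forall n y, Rabs y < r -> Rabs (F n y) <= M n /\ Rabs (F' n y) <= M n) ->
  forall x, derivable_pt_lim (fun y => Series (fun n => F n y)) x (Series (fun n => F' n x)).
Proof.
  intros HD HC HM x.
  assert (Hr : 0 < Rabs x + 1) by (pose proof (Rabs_pos x); lra).
  destruct (HM _ Hr) as [M [EM HMb]].
  set (rr := mkposreal _ Hr).
  assert (HB : forall y, Boule 0 rr y -> Rabs y < Rabs x + 1).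
  { intros y H; unfold Boule in H; simpl in H; rewrite Rminus_0_r in H; auto. }
  assert (CV : CVU (fun N y => sum_f_R0 (fun n => F' n y) N) (fun y => Series (fun n => F' n y)) 0 rr).
  { intros e He. pose proof (Series_correct M EM) as C. apply is_series_Reals in C.
    destruct (C e He) as [N0 HN0]. exists N0. intros N y HN Hy.
    specialize (HB y Hy).
    assert (Ey : ex_series (fun n => F' n y)) by (apply (exs_le _ M); auto; intros; apply HMb; auto).
    rewrite (Series_incr_n _ (S N)) by (auto; lia). simpl pred.
    replace (sum_f_R0 (fun n => F' n y) N + Series (fun k => F' (S N + k)%nat y) - sum_f_R0 (fun n => F' n y) N)
      with (Series (fun k => F' (S N + k)%nat y)) by ring.
    eapply Rle_lt_trans. apply (Series_abs_le _ (fun k => M (S N + k)%nat)).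
    intros k; apply HMb; auto. apply exs_shift; auto.
    specialize (HN0 N HN). unfold R_dist in HN0.
    rewrite (Series_incr_n M (S N)) in HN0 by (auto; lia). simpl pred in HN0.
    replace (sum_f_R0 M N - (sum_f_R0 M N + Series (fun k => M (S N + k)%nat))) with
      (- Series (fun k => M (S N + k)%nat)) in HN0 by ring.
    rewrite Rabs_Ropp in HN0. eapply Rle_lt_trans; [apply Rle_abs|exact HN0]. }
  apply (derivable_pt_lim_CVU (fun N y => sum_f_R0 (fun n => F n y) N)
           (fun N y => sum_f_R0 (fun n => F' n y) N) _ (fun y => Series (fun n => F' n y)) x 0 rr).
  - unfold Boule; simpl; rewrite Rminus_0_r; lra.
  - intros y N _. induction N; simpl. apply HD.
    apply (derivable_pt_lim_plus (fun y => sum_f_R0 (fun n => F n y) N) (F (S N))); auto.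
  - intros y Hy. specialize (HB y Hy).
    assert (Ey : ex_series (fun n => F n y)) by (apply (exs_le _ M); auto; intros; apply HMb; auto).
    apply is_series_Reals, Series_correct, Ey.
  - exact CV.
  - apply (CVU_continuity _ _ 0 rr CV). intros N y _. induction N; simpl. apply HC.
    apply (continuity_pt_plus (fun y => sum_f_R0 (fun n => F' n y) N) (F' (S N))); auto.
Qed.

Definition qm (l : R) (k : nat) : R := match k with O => 0 | S k' => q l k' end.
Definition D (l : R) (k : nat) : R := q l k - qm l k.

Lemma q_deriv k t : derivable_pt_lim (fun t => q (t / 2) k) t ((qm (t / 2) k - q (t / 2) k) / 2).
Proof.
  apply is_derive_Reals. destruct k as [|k]; unfold qm, q.
  - auto_derive. trivial. simpl. unfold Rdiv. field.
  - auto_derive. trivial. unfold Rdiv.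
    change (match k with 0%nat => 1 | S _ => INR k + 1 end) with (INR (S k)).
    change (fact k + k * fact k)%nat with (fact (S k)).
    rewrite fact_simpl, mult_INR. pose proof (INR_fact_lt_0 k). pose proof (lt_0_INR (S k) ltac:(lia)).
    simpl pow. field. lra.
Qed.

Lemma q_cont k t : continuity_pt (fun t => q (t / 2) k) t.
Proof. eapply derivable_continuous_pt. exists ((qm (t / 2) k - q (t / 2) k) / 2). apply q_deriv. Qed.

Lemma qm_cont k t : continuity_pt (fun t => qm (t / 2) k) t.
Proof. destruct k; simpl. apply continuity_pt_const. intros ? ?; auto. apply q_cont. Qed.

Definition Fk (a k : nat) (t : R) := q (t / 2) k * q (t / 2) (k + a).
Definition Fk' (a k : nat) (t : R) :=
  (qm (t / 2) k - q (t / 2) k) / 2 * q (t / 2) (k + a) + q (t / 2) k * ((qm (t / 2) (k + a) - q (t / 2) (k + a)) / 2).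
Definition P' (t : R) (a : nat) := Series (fun k => Fk' a k t).

Lemma Fk_deriv a k t : derivable_pt_lim (Fk a k) t (Fk' a k t).
Proof.
  unfold Fk, Fk'. apply (derivable_pt_lim_mult (fun t => q (t / 2) k) (fun t => q (t / 2) (k + a))); apply q_deriv.
Qed.

Lemma cont_mult (f g : R -> R) x : continuity_pt f x -> continuity_pt g x -> continuity_pt (fun t => f t * g t) x.
Proof. apply continuity_pt_mult. Qed.
Lemma cont_plus (f g : R -> R) x : continuity_pt f x -> continuity_pt g x -> continuity_pt (fun t => f t + g t) x.
Proof. apply continuity_pt_plus. Qed.
Lemma cont_minus (f g : R -> R) x : continuity_pt f x -> continuity_pt g x -> continuity_pt (fun t => f t - g t) x.
Proof. apply continuity_pt_minus. Qed.
Lemma cont_div2 (f : R -> R) x : continuity_pt f x -> continuity_pt (fun t => f t / 2) x.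
Proof. intros H. apply (cont_mult f (fun _ => / 2)); auto. apply continuity_pt_const; intros ? ?; auto. Qed.
Lemma cont_const c x : continuity_pt (fun _ => c) x.
Proof. apply continuity_pt_const; intros ? ?; auto. Qed.

Lemma Fk'_cont a k t : continuity_pt (Fk' a k) t.
Proof.
  unfold Fk'. repeat first [apply q_cont | apply qm_cont | apply cont_minus | apply cont_div2 | apply cont_plus | apply cont_mult].
Qed.

Lemma Rabs_minus_le2 x y : Rabs (x - y) <= Rabs x + Rabs y.
Proof. unfold Rminus. eapply Rle_trans. apply Rabs_triang. rewrite Rabs_Ropp. lra. Qed.

Lemma exp_le x y : x <= y -> exp x <= exp y.
Proof. intros [h|h]. left; apply exp_increasing; auto. rewrite h; lra. Qed.

Lemma geom4_sum c : Series (fun n => c * (/ 4) ^ n) = c * (4 / 3).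
Proof.
  rewrite Series_scal_l. f_equal. apply is_series_unique.
  replace (4 / 3) with (/ (1 - / 4)) by field. apply is_series_geom. rewrite Rabs_pos_eq; lra.
Qed.

Lemma q_geomr r t j : Rabs t < r -> Rabs (q (t / 2) j) <= exp (5 * r) * (/ 4) ^ j.
Proof.
  intros H. eapply Rle_trans. apply q_geom. apply Rmult_le_compat_r. apply pow_le; lra.
  apply exp_le. unfold Rdiv. rewrite Rabs_mult, (Rabs_pos_eq (/ 2)) by lra. pose proof (Rabs_pos t). lra.
Qed.

Lemma qm_geomr r t j : Rabs t < r -> Rabs (qm (t / 2) j) <= 4 * exp (5 * r) * (/ 4) ^ j.
Proof.
  intros H. destruct j; simpl qm.
  - rewrite Rabs_R0. pose proof (exp_pos (5 * r)). simpl. lra.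
  - eapply Rle_trans. apply q_geomr; eauto. simpl. right; field.
Qed.

Lemma Fk_dom r t a k : Rabs t < r ->
  Rabs (Fk a k t) <= 5 * exp (5 * r) ^ 2 * (/ 4) ^ a * (/ 4) ^ k /\
  Rabs (Fk' a k t) <= 5 * exp (5 * r) ^ 2 * (/ 4) ^ a * (/ 4) ^ k.
Proof.
  intros H. set (G := exp (5 * r)). assert (HG : 0 < G) by apply exp_pos.
  set (u := (/ 4) ^ k). set (w := (/ 4) ^ a).
  assert (Hu : 0 < u <= 1) by (split; [apply pow_lt; lra | apply pow_le_one; lra]).
  assert (Hw : 0 < w <= 1) by (split; [apply pow_lt; lra | apply pow_le_one; lra]).
  pose proof (q_geomr r t k H) as A1. pose proof (qm_geomr r t k H) as A2.
  pose proof (q_geomr r t (k + a) H) as A3. pose proof (qm_geomr r t (k + a) H) as A4.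
  rewrite pow_add in A3, A4. fold u w G in A1, A2, A3, A4.
  assert (UW : u * w <= w) by nra.
  assert (B3 : Rabs (q (t / 2) (k + a)) <= G * w) by (eapply Rle_trans; [exact A3|]; apply Rmult_le_compat_l; lra).
  assert (B4 : Rabs (qm (t / 2) (k + a)) <= 4 * G * w) by (eapply Rle_trans; [exact A4|]; apply Rmult_le_compat_l; lra).
  unfold Fk, Fk'. set (x1 := q (t / 2) k) in *. set (x2 := qm (t / 2) k) in *.
  set (x3 := q (t / 2) (k + a)) in *. set (x4 := qm (t / 2) (k + a)) in *.
  split.
  - rewrite Rabs_mult. apply Rle_trans with ((G * u) * (G * w)).
    apply Rmult_le_compat; auto using Rabs_pos. replace (G ^ 2) with (G * G) by ring.
    assert (0 <= G * G * w * u) by (repeat apply Rmult_le_pos; lra). lra.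
  - replace ((x2 - x1) / 2 * x3 + x1 * ((x4 - x3) / 2)) with (((x2 - x1) * x3 + x1 * (x4 - x3)) * / 2) by field.
    rewrite Rabs_mult, (Rabs_pos_eq (/ 2)) by lra.
    assert (Rabs (x2 - x1) <= 5 * G * u) by (eapply Rle_trans; [apply Rabs_minus_le2|]; lra).
    assert (Rabs (x4 - x3) <= 5 * G * w) by (eapply Rle_trans; [apply Rabs_minus_le2|]; lra).
    pose proof (Rabs_pos (x2 - x1)). pose proof (Rabs_pos (x4 - x3)). pose proof (Rabs_pos x1). pose proof (Rabs_pos x3).
    apply Rle_trans with (((5 * G * u) * (G * w) + (G * u) * (5 * G * w)) * / 2).
    apply Rmult_le_compat_r. lra. eapply Rle_trans. apply Rabs_triang. rewrite !Rabs_mult.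
    apply Rplus_le_compat; apply Rmult_le_compat; lra.
    right. field.
Qed.

Lemma P_deriv a t : derivable_pt_lim (fun t => P t a) t (P' t a).
Proof.
  apply (deriv_series (Fk a) (Fk' a)).
  - intros; apply Fk_deriv.
  - intros; apply Fk'_cont.
  - intros r Hr. exists (fun k => (5 * exp (5 * r) ^ 2 * (/ 4) ^ a) * (/ 4) ^ k). split.
    apply geom_ex. intros n y Hy. apply Fk_dom; auto.
Qed.

Lemma P_dom r t a : Rabs t < r ->
  Rabs (P t a) <= 7 * exp (5 * r) ^ 2 * (/ 4) ^ a /\ Rabs (P' t a) <= 7 * exp (5 * r) ^ 2 * (/ 4) ^ a.
Proof.
  intros H. assert (0 <= exp (5 * r) ^ 2 * (/ 4) ^ a) by (apply Rmult_le_pos; apply pow_le; [left; apply exp_pos|lra]).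
  split.
  - eapply Rle_trans. apply (Series_abs_le _ (fun k => (5 * exp (5 * r) ^ 2 * (/ 4) ^ a) * (/ 4) ^ k)).
    intros k; apply (Fk_dom r t a k H). apply geom_ex. rewrite geom4_sum. lra.
  - eapply Rle_trans. apply (Series_abs_le _ (fun k => (5 * exp (5 * r) ^ 2 * (/ 4) ^ a) * (/ 4) ^ k)).
    intros k; apply (Fk_dom r t a k H). apply geom_ex. rewrite geom4_sum. lra.
Qed.

Lemma qm_geom l k : Rabs (qm l k) <= 4 * exp (5 * Rabs l) * (/ 4) ^ k.
Proof.
  destruct k; simpl qm. rewrite Rabs_R0. pose proof (exp_pos (5 * Rabs l)). simpl; lra.
  eapply Rle_trans. apply q_geom. simpl. right; field.
Qed.

Lemma q_bnd l k : Rabs (q l k) <= 4 * exp (5 * Rabs l).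
Proof.
  eapply Rle_trans. apply q_geom. pose proof (exp_pos (5 * Rabs l)).
  assert ((/4) ^ k <= 1) by (apply pow_le_one; lra). nra.
Qed.

Lemma qm_bnd l k : Rabs (qm l k) <= 4 * exp (5 * Rabs l).
Proof.
  eapply Rle_trans. apply qm_geom. pose proof (exp_pos (5 * Rabs l)).
  assert (0 <= (/4) ^ k <= 1) by (split; [apply pow_le|apply pow_le_one]; lra). nra.
Qed.

Lemma D_geom l k : Rabs (D l k) <= 5 * exp (5 * Rabs l) * (/ 4) ^ k.
Proof. unfold D. eapply Rle_trans. apply Rabs_minus_le2. pose proof (q_geom l k). pose proof (qm_geom l k). lra. Qed.

Lemma D_bnd l k : Rabs (D l k) <= 8 * exp (5 * Rabs l).
Proof. unfold D. eapply Rle_trans. apply Rabs_minus_le2. pose proof (q_bnd l k). pose proof (qm_bnd l k). lra. Qed.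

Lemma exs_prod (f g : nat -> R) C1 C2 : (forall k, Rabs (f k) <= C1 * (/ 4) ^ k) ->
  (forall j, Rabs (g j) <= C2) -> ex_series (fun k => f k * g k).
Proof.
  intros H1 H2. apply (exs_le _ (fun k => (C1 * C2) * (/ 4) ^ k)); [|apply geom_ex].
  intros k. rewrite Rabs_mult. pose proof (H1 k). pose proof (H2 k). pose proof (Rabs_pos (f k)). pose proof (Rabs_pos (g k)).
  assert (0 <= (/4) ^ k) by (apply pow_le; lra).
  apply Rle_trans with ((C1 * (/4) ^ k) * C2). apply Rmult_le_compat; auto. right; ring.
Qed.

Lemma exs_qq l a : ex_series (fun k => q l k * q l (k + a)).
Proof. apply (exs_prod _ (fun j => q l (j + a)) (exp (5 * Rabs l)) (4 * exp (5 * Rabs l))). apply q_geom. intros; apply q_bnd. Qed.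
Lemma exs_qmq l a : ex_series (fun k => qm l k * q l (k + a)).
Proof. apply (exs_prod _ (fun j => q l (j + a)) (4 * exp (5 * Rabs l)) (4 * exp (5 * Rabs l))). apply qm_geom. intros; apply q_bnd. Qed.
Lemma exs_qqm l a : ex_series (fun k => q l k * qm l (k + a)).
Proof. apply (exs_prod _ (fun j => qm l (j + a)) (exp (5 * Rabs l)) (4 * exp (5 * Rabs l))). apply q_geom. intros; apply qm_bnd. Qed.
Lemma exs_qmqm l a : ex_series (fun k => qm l k * qm l (k + a)).
Proof. apply (exs_prod _ (fun j => qm l (j + a)) (4 * exp (5 * Rabs l)) (4 * exp (5 * Rabs l))). apply qm_geom. intros; apply qm_bnd. Qed.
Lemma exs_DD l a : ex_series (fun k => D l k * D l (k + a)).
Proof. apply (exs_prod _ (fun j => D l (j + a)) (5 * exp (5 * Rabs l)) (8 * exp (5 * Rabs l))). apply D_geom. intros; apply D_bnd. Qed.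

Lemma P'_D t a : P' t a = - (1 / 2) * Series (fun k => D (t / 2) k * D (t / 2) (k + a)).
Proof.
  unfold P'. set (l := t / 2).
  rewrite (Series_ext _ (fun k => - (1 / 2) * (D l k * D l (k + a)) +
                            (1 / 2) * (qm l k * qm l (k + a) - q l k * q l (k + a)))).
  2:{ intros k. unfold Fk', D. fold l. field. }
  rewrite Series_plus, !Series_scal_l, Series_minus.
  rewrite (Series_shift1 (fun k => qm l k * qm l (k + a))) by apply exs_qmqm.
  simpl qm at 1. rewrite Rmult_0_l, Rplus_0_l. simpl. ring.
  apply exs_qmqm. apply exs_qq. apply exs_scal, exs_DD. apply exs_scal, exs_minus. apply exs_qmqm. apply exs_qq.
Qed.

Lemma P'_lap t b : P' t (S b) = (P t (S (S b)) + P t b - 2 * P t (S b)) / 2.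
Proof.
  unfold P', P. set (l := t / 2).
  rewrite (Series_ext _ (fun k => (1 / 2) * (qm l k * q l (k + S b)) + (1 / 2) * (q l k * qm l (k + S b))
                                 + (-1) * (q l k * q l (k + S b)))).
  2:{ intros k. unfold Fk'. fold l. field. }
  rewrite Series_plus, Series_plus, !Series_scal_l.
  rewrite (Series_shift1 (fun k => qm l k * q l (k + S b))) by apply exs_qmq.
  simpl qm at 1. rewrite Rmult_0_l, Rplus_0_l.
  rewrite (Series_ext (fun k => qm l (S k) * q l (S k + S b)) (fun k => q l k * q l (k + S (S b)))).
  2:{ intros k. simpl qm. f_equal. f_equal. lia. }
  rewrite (Series_ext (fun k => q l k * qm l (k + S b)) (fun k => q l k * q l (k + b))).
  2:{ intros k. rewrite Nat.add_succ_r. reflexivity. }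
  field.
  apply exs_scal, exs_qmq. apply exs_scal, exs_qqm. apply exs_plus; apply exs_scal. apply exs_qmq. apply exs_qqm.
  apply exs_scal, exs_qq.
Qed.

Lemma q0 l : q l 0 = exp (- l).
Proof. unfold q. simpl. field. Qed.

Lemma expm_le l : 0 <= l -> exp (- l) <= / (1 + l).
Proof.
  intros H. rewrite exp_Ropp. apply Rinv_le_contravar. lra. apply exp_ineq1_le.
Qed.

Lemma sqrt_le_1pl l : 0 <= l -> sqrt l <= 1 + l.
Proof.
  intros H. pose proof (sqrt_pos l). pose proof (sqrt_sqrt l H).
  destruct (Rle_dec (sqrt l) 1). lra. nra.
Qed.

Lemma D_abs_ex l : ex_series (fun k => Rabs (D l k)).
Proof. apply (exs_abs _ (fun k => (5 * exp (5 * Rabs l)) * (/ 4) ^ k)). apply D_geom. apply geom_ex. Qed.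

Lemma D_sum l : Series (fun k => Rabs (D l k)) = exp (- l) + Series (fun k => Rabs (nq l k)).
Proof.
  rewrite Series_shift1 by apply D_abs_ex. unfold D at 1. simpl qm. rewrite q0, Rminus_0_r.
  rewrite Rabs_pos_eq by (left; apply exp_pos). f_equal.
Qed.

Lemma P'_gen t a B1 B2 : (forall k, Rabs (D (t / 2) k) <= B1) ->
  Series (fun k => Rabs (D (t / 2) k)) <= B2 -> Rabs (P' t a) <= / 2 * (B1 * B2).
Proof.
  intros H1 H2. rewrite P'_D. rewrite Rabs_mult.
  replace (Rabs (- (1 / 2))) with (/ 2) by (rewrite Rabs_Ropp, Rabs_pos_eq; lra).
  apply Rmult_le_compat_l. lra.
  assert (0 <= B1) by (apply Rle_trans with (Rabs (D (t / 2) 0)); auto using Rabs_pos).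
  eapply Rle_trans. apply (Series_abs_le _ (fun k => B1 * Rabs (D (t / 2) k))).
  intros k. rewrite Rabs_mult, Rmult_comm. apply Rmult_le_compat_r; auto using Rabs_pos.
  apply exs_scal, D_abs_ex. rewrite Series_scal_l. apply Rmult_le_compat_l; auto.
Qed.

Lemma P'_bnd1 t a : 0 <= t -> Rabs (P' t a) <= 2.
Proof.
  intros Ht. set (l := t / 2). assert (0 <= l) by (unfold l; lra).
  eapply Rle_trans. apply (P'_gen t a 1 3).
  - intros k. fold l. destruct k; unfold D; simpl qm.
    rewrite Rminus_0_r, Rabs_pos_eq by (apply q_nonneg; auto). apply q_le1; auto.
    pose proof (q_le1 l k H). pose proof (q_le1 l (S k) H). pose proof (q_nonneg l k H). pose proof (q_nonneg l (S k) H).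
    unfold Rabs; destruct Rcase_abs; lra.
  - fold l. rewrite D_sum. pose proof (nq_sum_le2 l H). pose proof (exp_le (-l) 0 ltac:(lra)). rewrite exp_0 in H1. lra.
  - lra.
Qed.

Lemma P'_bnd2 t a : 0 < t -> Rabs (P' t a) <= 2 / (t / 2) * / sqrt (t / 2).
Proof.
  intros Ht. set (l := t / 2). assert (Hl : 0 < l) by (unfold l; lra).
  pose proof (sqrt_lt_R0 l Hl). pose proof (expm_le l ltac:(lra)). pose proof (sqrt_le_1pl l ltac:(lra)).
  eapply Rle_trans. apply (P'_gen t a (2 / l) (2 / sqrt l)).
  - intros k. fold l. destruct k; unfold D; simpl qm.
    rewrite Rminus_0_r, Rabs_pos_eq by (apply q_nonneg; lra). rewrite q0. eapply Rle_trans. exact H0.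
    apply Rle_trans with (/ l). apply Rinv_le_contravar; lra. unfold Rdiv. assert (0 < / l) by (apply Rinv_0_lt_compat; lra). lra.
    apply nq_sup; auto.
  - fold l. rewrite D_sum. pose proof (nq_sum_le l Hl).
    assert (/ (1 + l) <= / sqrt l) by (apply Rinv_le_contravar; lra). unfold Rdiv. lra.
  - right. unfold Rdiv. field. lra.
Qed.

Lemma ln_le0 x : 0 < x <= 1 -> ln x <= 0.
Proof. intros [H1 [H2|H2]]. left. rewrite <- ln_1. apply ln_increasing; auto. rewrite H2, ln_1; lra. Qed.

Lemma ln_ge0 x : 1 <= x -> 0 <= ln x.
Proof. intros [H|H]. left. rewrite <- ln_1. apply ln_increasing; lra. rewrite <- H, ln_1; lra. Qed.

Lemma rp_small x v : 0 < x <= 1 -> 0 <= v <= 1 -> x <= Rpower x v.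
Proof.
  intros Hx Hv. unfold Rpower. pose proof (ln_le0 x Hx). rewrite <- (exp_ln x) at 1 by lra.
  apply exp_le. nra.
Qed.

Lemma rp_big x v : 1 <= x -> 0 <= v -> 1 <= Rpower x v.
Proof.
  intros Hx Hv. unfold Rpower. pose proof (ln_ge0 x Hx). rewrite <- exp_0. apply exp_le. nra.
Qed.



Lemma interp K a h v : 0 <= K -> 0 < h -> 0 <= v <= 1 ->
  a <= 2 * K -> a <= K * h -> a <= 2 * K * Rpower h v.
Proof.
  intros HK Hh Hv H1 H2. destruct (Rle_dec h 1).
  - pose proof (rp_small h v ltac:(lra) Hv). nra.
  - pose proof (rp_big h v ltac:(lra) ltac:(lra)). nra.
Qed.

Lemma holder (g g' : R -> R) K Tm s t v :
  0 <= K ->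
  (forall u, 0 <= u <= Tm -> derivable_pt_lim g u (g' u)) ->
  (forall u, 0 <= u <= Tm -> Rabs (g u) <= K) ->
  (forall u, 0 < u <= Tm -> Rabs (g u) <= K / sqrt u) ->
  (forall u, 0 <= u <= Tm -> Rabs (g' u) <= K) ->
  (forall u, 0 < u <= Tm -> Rabs (g' u) <= K / (u * sqrt u)) ->
  0 <= s -> s < t -> t <= Tm -> 0 <= v <= 1 ->
  Rabs (g t - g s) <= 2 * K * min1_pow s v * Rpower (t - s) v.
Proof.
  intros HK HD H0 H1 H2 H3 Hs Hst HtT Hv.
  destruct (MVT_cor2 g g' s t Hst) as [c [Hc Hcst]]. { intros c Hc; apply HD; lra. }
  assert (A1 : Rabs (g t - g s) <= 2 * K).
  { eapply Rle_trans. apply Rabs_minus_le2. pose proof (H0 t ltac:(lra)). pose proof (H0 s ltac:(lra)). lra. }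
  assert (A2 : Rabs (g t - g s) <= K * (t - s)).
  { rewrite Hc, Rabs_mult, (Rabs_pos_eq (t - s)) by lra. apply Rmult_le_compat_r. lra. apply H2; lra. }
  unfold min1_pow. destruct (Rle_dec s 0) as [Hs0|Hs0].
  - rewrite Rmult_1_r. apply interp; auto; lra.
  - destruct (Rle_dec s 1) as [Hs1|Hs1].
    + assert (Hm : Rmin 1 (Rpower s (- (1 / 2) - v)) = 1).
      { apply Rmin_left. unfold Rpower. apply Rle_trans with (exp 0); [rewrite exp_0; lra|]. apply exp_le.
        pose proof (ln_le0 s ltac:(lra)).
        replace ((- (1 / 2) - v) * ln s) with ((1 / 2 + v) * (- ln s)) by ring. apply Rmult_le_pos; lra. }
      rewrite Hm, Rmult_1_r. apply interp; auto; lra.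
    + assert (Hs' : 1 < s) by lra. assert (Hp : 0 < s) by lra.
      pose proof (sqrt_lt_R0 s Hp) as Hq. pose proof (sqrt_sqrt s (Rlt_le _ _ Hp)) as Hqq.
      assert (Hm : Rmin 1 (Rpower s (- (1 / 2) - v)) = Rpower s (- (1 / 2) - v)).
      { apply Rmin_right. unfold Rpower. apply Rle_trans with (exp 0); [|rewrite exp_0; lra]. apply exp_le.
        pose proof (ln_ge0 s ltac:(lra)).
        replace ((- (1 / 2) - v) * ln s) with (- ((1 / 2 + v) * ln s)) by ring.
        assert (0 <= (1 / 2 + v) * ln s) by (apply Rmult_le_pos; lra). lra. }
      rewrite Hm.
      assert (E : Rpower s (- (1 / 2) - v) * Rpower (t - s) v = / sqrt s * Rpower ((t - s) / s) v).
      { rewrite <- Rpower_sqrt by auto. unfold Rpower. rewrite <- exp_Ropp, <- exp_plus, <- exp_plus. f_equal.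
        unfold Rdiv. rewrite ln_mult, ln_Rinv by (try apply Rinv_0_lt_compat; lra). ring. }
      rewrite Rmult_assoc, E.
      assert (B1 : Rabs (g t - g s) <= 2 * (K / sqrt s)).
      { eapply Rle_trans. apply Rabs_minus_le2. pose proof (H1 t ltac:(lra)). pose proof (H1 s ltac:(lra)).
        assert (K / sqrt t <= K / sqrt s).
        { unfold Rdiv. apply Rmult_le_compat_l; auto. apply Rinv_le_contravar; auto. apply sqrt_le_1_alt; lra. }
        lra. }
      assert (B2 : Rabs (g t - g s) <= K / sqrt s * ((t - s) / s)).
      { rewrite Hc, Rabs_mult, (Rabs_pos_eq (t - s)) by lra.
        eapply Rle_trans. apply Rmult_le_compat_r. lra. apply H3; lra.
        assert (K / (c * sqrt c) <= K / (s * sqrt s)).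
        { unfold Rdiv. apply Rmult_le_compat_l; auto. apply Rinv_le_contravar. nra.
          pose proof (sqrt_le_1_alt s c ltac:(lra)). apply Rmult_le_compat; lra. }
        apply Rle_trans with (K / (s * sqrt s) * (t - s)). apply Rmult_le_compat_r; lra.
        right. field. lra. }
      replace (2 * K * (/ sqrt s * Rpower ((t - s) / s) v)) with (2 * (K / sqrt s) * Rpower ((t - s) / s) v) by (unfold Rdiv; ring).
      apply interp; auto.
      unfold Rdiv. apply Rmult_le_pos; auto. left; apply Rinv_0_lt_compat; auto.
      unfold Rdiv. apply Rmult_lt_0_compat. lra. apply Rinv_0_lt_compat; auto.
Qed.

Lemma pow4_le w n s : (/ 4) ^ (w + n + s) <= (/ 4) ^ n.
Proof.
  replace (w + n + s)%nat with (n + (w + s))%nat by lia. rewrite pow_add.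
  assert (0 <= (/4) ^ (w + s) <= 1) by (split; [apply pow_le|apply pow_le_one]; lra).
  assert (0 <= (/4) ^ n) by (apply pow_le; lra).
  rewrite <- (Rmult_1_r ((/4) ^ n)) at 2. apply Rmult_le_compat_l; lra.
Qed.

Lemma P_cont a t : continuity_pt (fun t => P t a) t.
Proof. eapply derivable_continuous_pt. exists (P' t a). apply P_deriv. Qed.

Lemma P'_cont b t : continuity_pt (fun t => P' t (S b)) t.
Proof.
  apply (continuity_pt_locally_ext (fun t => (P t (S (S b)) + P t b - 2 * P t (S b)) / 2) _ 1).
  lra. intros; rewrite P'_lap; auto.
  apply cont_div2. apply cont_minus. apply cont_plus; apply P_cont.
  apply (cont_mult (fun _ => 2)). apply cont_const. apply P_cont.
Qed.

Lemma exs_Pmu t w s i mu : 0 <= mu <= 2 -> ex_series (fun n => P t (w + n + s) * mu ^ (n + i)).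
Proof.
  intros Hm. set (r := Rabs t + 1). assert (Hr : Rabs t < r) by (unfold r; lra).
  set (C := 7 * exp (5 * r) ^ 2).
  assert (HC : 0 <= C) by (unfold C; apply Rmult_le_pos; [lra|apply pow_le; left; apply exp_pos]).
  apply (exs_le _ (fun n => (C * mu ^ i) * (mu / 4) ^ n)).
  - intros n. destruct (P_dom r t (w + n + s) Hr) as [H1 _]. fold C in H1.
    rewrite Rabs_mult, (Rabs_pos_eq (mu ^ _)) by (apply pow_le; lra).
    rewrite (pow_add mu).
    assert ((/ 4) ^ (w + n + s) <= (/ 4) ^ n) by apply pow4_le.
    assert (0 <= mu ^ n) by (apply pow_le; lra). assert (0 <= mu ^ i) by (apply pow_le; lra).
    apply Rle_trans with ((C * (/ 4) ^ n) * (mu ^ n * mu ^ i)).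
    apply Rmult_le_compat_r. apply Rmult_le_pos; auto. eapply Rle_trans. exact H1. apply Rmult_le_compat_l; auto.
    right. unfold Rdiv. rewrite Rpow_mult_distr. ring.
  - apply exs_scal, exs_geom. split; unfold Rdiv; [apply Rmult_le_pos; lra | lra].
Qed.

Lemma exs_P'mu t w s i mu : 0 <= mu <= 2 -> ex_series (fun n => P' t (w + n + s) * mu ^ (n + i)).
Proof.
  intros Hm. set (r := Rabs t + 1). assert (Hr : Rabs t < r) by (unfold r; lra).
  set (C := 7 * exp (5 * r) ^ 2).
  assert (HC : 0 <= C) by (unfold C; apply Rmult_le_pos; [lra|apply pow_le; left; apply exp_pos]).
  apply (exs_le _ (fun n => (C * mu ^ i) * (mu / 4) ^ n)).
  - intros n. destruct (P_dom r t (w + n + s) Hr) as [_ H1]. fold C in H1.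
    rewrite Rabs_mult, (Rabs_pos_eq (mu ^ _)) by (apply pow_le; lra).
    rewrite (pow_add mu).
    assert ((/ 4) ^ (w + n + s) <= (/ 4) ^ n) by apply pow4_le.
    assert (0 <= mu ^ n) by (apply pow_le; lra). assert (0 <= mu ^ i) by (apply pow_le; lra).
    apply Rle_trans with ((C * (/ 4) ^ n) * (mu ^ n * mu ^ i)).
    apply Rmult_le_compat_r. apply Rmult_le_pos; auto. eapply Rle_trans. exact H1. apply Rmult_le_compat_l; auto.
    right. unfold Rdiv. rewrite Rpow_mult_distr. ring.
  - apply exs_scal, exs_geom. split; unfold Rdiv; [apply Rmult_le_pos; lra | lra].
Qed.

Definition RS (mu : R) (w : nat) (t : R) := Series (fun n => P t (w + n + 2) * mu ^ (n + 2)).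
Definition RS' (mu : R) (w : nat) (t : R) := Series (fun n => P' t (w + n + 2) * mu ^ (n + 2)).

Lemma RS_deriv mu w t : 0 <= mu <= 2 -> derivable_pt_lim (RS mu w) t (RS' mu w t).
Proof.
  intros Hm. apply (deriv_series (fun n t => P t (w + n + 2) * mu ^ (n + 2)) (fun n t => P' t (w + n + 2) * mu ^ (n + 2))).
  - intros n y. replace (P' y (w + n + 2) * mu ^ (n + 2)) with (P' y (w + n + 2) * mu ^ (n + 2) + P y (w + n + 2) * 0) by ring.
    apply (derivable_pt_lim_mult (fun t => P t (w + n + 2)) (fun _ => mu ^ (n + 2))). apply P_deriv. apply derivable_pt_lim_const.
  - intros n y. apply (cont_mult (fun t => P' t (w + n + 2))). replace (w + n + 2)%nat with (S (w + n + 1)) by lia. apply P'_cont. apply cont_const.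
  - intros r Hr. set (C := 7 * exp (5 * r) ^ 2).
    assert (HC : 0 <= C) by (unfold C; apply Rmult_le_pos; [lra|apply pow_le; left; apply exp_pos]).
    exists (fun n => (C * mu ^ 2) * (mu / 4) ^ n). split.
    apply exs_scal, exs_geom. split; unfold Rdiv; [apply Rmult_le_pos; lra | lra].
    intros n y Hy. destruct (P_dom r y (w + n + 2) Hy) as [H1 H2]. fold C in H1, H2.
    rewrite !Rabs_mult, (Rabs_pos_eq (mu ^ _)) by (apply pow_le; lra).
    rewrite pow_add.
    assert ((/ 4) ^ (w + n + 2) <= (/ 4) ^ n) by apply pow4_le.
    assert (0 <= mu ^ n) by (apply pow_le; lra). assert (0 <= mu ^ 2) by (apply pow_le; lra).
    assert (E : C * mu ^ 2 * (mu / 4) ^ n = (C * (/ 4) ^ n) * (mu ^ n * mu ^ 2)) by (unfold Rdiv; rewrite Rpow_mult_distr; ring).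
    rewrite E. split; (apply Rmult_le_compat_r; [apply Rmult_le_pos; auto|]; eapply Rle_trans; [eassumption|];
      apply Rmult_le_compat_l; auto).
Qed.

Lemma RS'_formula mu w t : 0 < mu <= 2 ->
  2 * RS' mu w t = (mu - 1) ^ 2 / mu * RS mu w t + mu ^ 2 * P t (w + 1) - mu * P t (w + 2).
Proof.
  intros Hm. unfold RS', RS.
  assert (Hm' : 0 <= mu <= 2) by lra.
  rewrite (Series_ext _ (fun n => / 2 * (P t (w + n + 3) * mu ^ (n + 2)) + / 2 * (P t (w + n + 1) * mu ^ (n + 2))
                                   + (-1) * (P t (w + n + 2) * mu ^ (n + 2)))).
  2:{ intros n. replace (w + n + 2)%nat with (S (w + n + 1)) by lia. rewrite P'_lap.
      replace (S (S (w + n + 1))) with (w + n + 3)%nat by lia. replace (S (w + n + 1)) with (w + n + 2)%nat by lia. field. }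
  rewrite Series_plus, Series_plus, !Series_scal_l.
  2,3: apply exs_scal; apply exs_Pmu; auto.
  2: apply exs_plus; apply exs_scal; apply exs_Pmu; auto.
  2: apply exs_scal; apply exs_Pmu; auto.
  set (S0 := Series (fun n => P t (w + n + 2) * mu ^ (n + 2))).
  assert (E1 : Series (fun n => P t (w + n + 3) * mu ^ (n + 2)) = / mu * (S0 - P t (w + 2) * mu ^ 2)).
  { unfold S0. rewrite (Series_shift1 (fun n => P t (w + n + 2) * mu ^ (n + 2))) by (apply exs_Pmu; auto).
    transitivity (/ mu * Series (fun n => P t (w + S n + 2) * mu ^ (S n + 2))).
    2:{ replace (w + 0 + 2)%nat with (w + 2)%nat by lia. change (mu ^ (0 + 2)) with (mu ^ 2). ring. }
    rewrite <- Series_scal_l. apply Series_ext. intros n. replace (w + S n + 2)%nat with (w + n + 3)%nat by lia.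
    replace (S n + 2)%nat with (S (n + 2)) by lia. simpl pow. field. lra. }
  assert (E2 : Series (fun n => P t (w + n + 1) * mu ^ (n + 2)) = mu * (P t (w + 1) * mu + S0)).
  { transitivity (mu * Series (fun n => P t (w + n + 1) * mu ^ (n + 1))).
    { rewrite <- Series_scal_l. apply Series_ext. intros n. replace (n + 2)%nat with (S (n + 1)) by lia. simpl pow. ring. }
    f_equal. rewrite Series_shift1 by (apply exs_Pmu; auto).
    replace (w + 0 + 1)%nat with (w + 1)%nat by lia. change (mu ^ (0 + 1)) with (mu * 1).
    rewrite Rmult_1_r. f_equal. unfold S0. apply Series_ext. intros n.
    replace (w + S n + 1)%nat with (w + n + 2)%nat by lia. replace (S n + 1)%nat with (n + 2)%nat by lia. ring. }
  rewrite E1, E2. replace (w + 0 + 2)%nat with (w + 2)%nat by lia. field. lra.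
Qed.

Lemma q_gen_ex l x : ex_series (fun k => q l k * x ^ k).
Proof.
  apply (exs_ext (fun k => exp (- l) * (/ INR (fact k) * (l * x) ^ k))).
  intros k. unfold q. rewrite Rpow_mult_distr. unfold Rdiv. ring.
  apply exs_scal, exp_ex.
Qed.

Lemma q_gen l x : Series (fun k => q l k * x ^ k) = exp (- l) * exp (l * x).
Proof.
  rewrite (Series_ext _ (fun k => exp (- l) * (/ INR (fact k) * (l * x) ^ k))).
  rewrite Series_scal_l, <- exp_Series; auto.
  intros k. unfold q. rewrite Rpow_mult_distr. unfold Rdiv. ring.
Qed.

Lemma sum_Series_swap (g : nat -> nat -> R) N : (forall b, ex_series (g b)) ->
  ex_series (fun k => sum_f_R0 (fun b => g b k) N) /\
  sum_f_R0 (fun b => Series (g b)) N = Series (fun k => sum_f_R0 (fun b => g b k) N).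
Proof.
  intros H. induction N; simpl.
  - split; auto.
  - destruct IHN as [E1 E2]. split. apply exs_plus; auto.
    rewrite Series_plus; auto. rewrite E2; auto.
Qed.

Lemma PB_bound u nu N : 0 <= u -> 1 <= nu ->
  sum_f_R0 (fun b => P u b * nu ^ b) N <=
  Series (fun k => q (u / 2) k * (/ nu) ^ k) * Series (fun m => q (u / 2) m * nu ^ m).
Proof.
  intros Hu Hnu. set (l := u / 2). assert (Hl : 0 <= l) by (unfold l; lra).
  set (E2 := Series (fun m => q l m * nu ^ m)).
  set (g := fun b k => q l k * q l (k + b) * nu ^ b).
  assert (Hg : forall b, ex_series (g b)).
  { intros b. unfold g. apply (exs_ext (fun k => nu ^ b * (q l k * q l (k + b)))). intros; ring. apply exs_scal, exs_qq. }
  assert (HP : forall b, P u b * nu ^ b = Series (g b)).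
  { intros b. unfold P, g. fold l. rewrite Rmult_comm, <- Series_scal_l. apply Series_ext; intros; ring. }
  rewrite (sum_eq _ (fun b => Series (g b))) by (intros; apply HP).
  destruct (sum_Series_swap g N Hg) as [Ex Eq]. rewrite Eq.
  assert (Hnu0 : 0 < nu) by lra.
  assert (Hh : forall m, 0 <= q l m * nu ^ m) by (intros; apply Rmult_le_pos; [apply q_nonneg; auto|apply pow_le; lra]).
  apply Rle_trans with (Series (fun k => (q l k * (/ nu) ^ k) * E2)).
  - apply Series_le.
    + intros k. split.
      * apply sum_nonneg. intros b. unfold g. apply Rmult_le_pos. apply Rmult_le_pos; apply q_nonneg; auto. apply pow_le; lra.
      * assert (Ek : sum_f_R0 (fun b => g b k) N = (q l k * (/ nu) ^ k) * sum_f_R0 (fun b => q l (k + b) * nu ^ (k + b)) N).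
        { rewrite scal_sum. apply sum_eq. intros b _. unfold g. rewrite pow_add, pow_inv.
          field. apply pow_nonzero; lra. }
        rewrite Ek. apply Rmult_le_compat_l.
        apply Rmult_le_pos. apply q_nonneg; auto. apply pow_le. left; apply Rinv_0_lt_compat; lra.
        eapply Rle_trans. apply (sum_le_Series (fun b => q l (k + b) * nu ^ (k + b))).
        apply (exs_shift (fun m => q l m * nu ^ m)), q_gen_ex. intros; auto.
        apply (tail_le_Series (fun m => q l m * nu ^ m)). apply q_gen_ex. auto.
    + apply (exs_ext (fun k => E2 * (q l k * (/ nu) ^ k))). intros; ring. apply exs_scal, q_gen_ex.
  - rewrite (Series_ext _ (fun k => E2 * (q l k * (/ nu) ^ k))) by (intros; ring).
    rewrite Series_scal_l. right; ring.
Qed.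

Lemma RS_nonneg mu w u : 0 <= u -> 0 < mu <= 2 -> 0 <= RS mu w u.
Proof.
  intros Hu Hm. apply Series_nonneg. apply exs_Pmu; lra.
  intros n. apply Rmult_le_pos. apply P_nonneg; auto. apply pow_le; lra.
Qed.

Lemma RS_bound mu w u : 0 <= u -> 0 < mu <= 2 -> RS mu w u <= exp (u / 2 * (Rmax 1 mu - 1) ^ 2).
Proof.
  intros Hu Hm. set (nu := Rmax 1 mu). assert (H1 : 1 <= nu) by apply Rmax_l. assert (H2 : mu <= nu) by apply Rmax_r.
  assert (H3 : nu <= 2) by (apply Rmax_lub; lra).
  set (f := fun b => P u b * nu ^ b).
  assert (Ef : ex_series f).
  { apply (exs_ext (fun n => P u (0 + n + 0) * nu ^ (n + 0))). intros n; unfold f. f_equal; f_equal; lia.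
    apply exs_Pmu; lra. }
  assert (Hf : forall b, 0 <= f b) by (intros; unfold f; apply Rmult_le_pos; [apply P_nonneg; auto|apply pow_le; lra]).
  apply Rle_trans with (Series f).
  - unfold RS. apply Rle_trans with (Series (fun n => f ((w + 2) + n)%nat)).
    + apply Series_le. 2: apply exs_shift; auto.
      intros n. split. apply Rmult_le_pos. apply P_nonneg; auto. apply pow_le; lra.
      unfold f. replace (w + 2 + n)%nat with (w + n + 2)%nat by lia.
      apply Rmult_le_compat_l. apply P_nonneg; auto.
      apply Rle_trans with (nu ^ (n + 2)). apply pow_incr; lra. apply Rle_pow; auto. lia.
    + apply tail_le_Series; auto.
  - apply Rle_trans with (Series (fun k => q (u / 2) k * (/ nu) ^ k) * Series (fun m => q (u / 2) m * nu ^ m)).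
    + apply Series_le_bound; auto. intros N. apply PB_bound; auto.
    + rewrite !q_gen. rewrite <- !exp_plus. apply exp_le.
      set (l := u / 2). assert (0 <= l) by (unfold l; lra).
      assert (E : - l + l * / nu + (- l + l * nu) = l * ((nu - 1) ^ 2 / nu)) by (field; lra).
      rewrite E. apply Rmult_le_compat_l; auto.
      assert (0 <= (nu - 1) ^ 2) by apply pow2_ge_0.
      unfold Rdiv. rewrite <- (Rmult_1_r ((nu - 1) ^ 2)) at 2. apply Rmult_le_compat_l; auto.
      rewrite <- Rinv_1. apply Rinv_le_contravar; lra.
Qed.

Lemma robin_eq A eps t x y : 0 < muA A eps <= 2 ->
  robin A eps t x y = P t (Z.abs_nat (Z.of_nat x - Z.of_nat y)) + muA A eps * P t (x + y + 1)
     + (1 - / (muA A eps ^ 2)) * RS (muA A eps) (x + y) t.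
Proof.
  intros Hm. unfold robin. set (mu := muA A eps) in *.
  rewrite !hk_P.
  replace (Z.abs_nat (Z.of_nat x + Z.of_nat y + 1)) with (x + y + 1)%nat.
  2:{ replace (Z.of_nat x + Z.of_nat y + 1)%Z with (Z.of_nat (x + y + 1)) by lia. symmetry; apply Zabs2Nat.id. }
  f_equal. f_equal. rewrite series_eq.
  - unfold RS. apply Series_ext. intros n. rewrite hk_P. f_equal. f_equal.
    replace (Z.of_nat x + Z.of_nat y + Z.of_nat (n + 2))%Z with (Z.of_nat (x + y + n + 2)) by lia. apply Zabs2Nat.id.
  - apply (exs_ext (fun n => P t (x + y + n + 2) * mu ^ (n + 2))).
    intros n. rewrite hk_P. f_equal. f_equal.
    replace (Z.of_nat x + Z.of_nat y + Z.of_nat (n + 2))%Z with (Z.of_nat (x + y + n + 2)) by lia. symmetry; apply Zabs2Nat.id.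
    apply exs_Pmu; lra.
Qed.

Lemma inv_sqrt_half u : 0 < u -> / sqrt (u / 2) <= 2 / sqrt u.
Proof.
  intros Hu. rewrite sqrt_div_alt by lra. pose proof (sqrt_lt_R0 u Hu). pose proof (sqrt_lt_R0 2 ltac:(lra)).
  assert (sqrt 2 <= 2). { rewrite <- (sqrt_square 2) at 2 by lra. apply sqrt_le_1_alt; lra. }
  replace (/ (sqrt u / sqrt 2)) with (sqrt 2 / sqrt u) by (field; lra).
  unfold Rdiv. apply Rmult_le_compat_r; [left; apply Rinv_0_lt_compat|]; lra.
Qed.

Lemma P_component a Tm s t v : 0 <= s -> s < t -> t <= Tm -> 0 <= v <= 1 ->
  Rabs (P t a - P s a) <= 2 * 8 * min1_pow s v * Rpower (t - s) v.
Proof.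
  intros Hs Hst HtT Hv. apply (holder (fun u => P u a) (fun u => P' u a) 8 Tm); auto; try lra.
  - intros u _. apply P_deriv.
  - intros u Hu. rewrite Rabs_pos_eq by (apply P_nonneg; lra). pose proof (P_le1 u a ltac:(lra)). lra.
  - intros u Hu. rewrite Rabs_pos_eq by (apply P_nonneg; lra).
    eapply Rle_trans. apply P_le_sqrt; lra. eapply Rle_trans. apply inv_sqrt_half; lra.
    pose proof (sqrt_lt_R0 u ltac:(lra)). unfold Rdiv. apply Rmult_le_compat_r. left; apply Rinv_0_lt_compat; lra. lra.
  - intros u Hu. pose proof (P'_bnd1 u a ltac:(lra)). lra.
  - intros u Hu. eapply Rle_trans. apply P'_bnd2; lra.
    pose proof (inv_sqrt_half u ltac:(lra)). pose proof (sqrt_lt_R0 u ltac:(lra)).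
    assert (0 <= / sqrt (u / 2)) by (left; apply Rinv_0_lt_compat, sqrt_lt_R0; lra).
    apply Rle_trans with (2 / (u / 2) * (2 / sqrt u)). apply Rmult_le_compat_l; auto.
    unfold Rdiv; apply Rmult_le_pos; [lra|left; apply Rinv_0_lt_compat; lra].
    right. field. lra.
Qed.

Definition KR (A T : R) : R :=
  10 * Rabs A * (exp (T * A ^ 2 / 2) + exp (T * A ^ 2 / 2) * sqrt T + A ^ 2 * exp (T * A ^ 2 / 2) + 3 + Rabs A
     + A ^ 2 * sqrt T ^ 3 * exp (T * A ^ 2 / 2) + 6 * sqrt T + 2 * Rabs A * sqrt T ^ 2).

Lemma abs_bounds x b : Rabs x <= b -> - b <= x <= b.
Proof. unfold Rabs; destruct Rcase_abs; intros; lra. Qed.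

Lemma R_component A T eps w s t v :
  0 < T -> 0 < eps <= 1 -> Rabs A * eps <= 1 / 2 -> 0 <= s -> s < t -> t <= T / eps ^ 2 -> 0 <= v <= 1 ->
  Rabs ((1 - / (muA A eps ^ 2)) * RS (muA A eps) w t - (1 - / (muA A eps ^ 2)) * RS (muA A eps) w s)
    <= 2 * KR A T * min1_pow s v * Rpower (t - s) v.
Proof.
  intros HT He HAe Hs Hst HtT Hv.
  set (mu := muA A eps). set (c := 1 - / (mu ^ 2)).
  assert (Ha : 0 <= Rabs A) by apply Rabs_pos.
  assert (Hae0 : 0 <= Rabs A * eps) by (apply Rmult_le_pos; lra).
  assert (HAe' : Rabs (A * eps) = Rabs A * eps) by (rewrite Rabs_mult, (Rabs_pos_eq eps); lra).
  assert (Hmu1 : Rabs (mu - 1) = Rabs A * eps).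
  { unfold mu, muA. replace (1 - A * eps - 1) with (- (A * eps)) by ring. rewrite Rabs_Ropp; auto. }
  assert (Hmu : 1 / 2 <= mu <= 3 / 2).
  { rewrite <- HAe' in HAe. apply abs_bounds in HAe. unfold mu, muA. lra. }
  assert (Hmu2 : 0 < mu <= 2) by lra.
  assert (Hc : Rabs c <= 10 * Rabs A * eps).
  { unfold c. replace (1 - / mu ^ 2) with ((mu - 1) * ((mu + 1) / mu ^ 2)) by (field; lra).
    rewrite Rabs_mult, Hmu1. rewrite (Rabs_pos_eq ((mu + 1) / mu ^ 2)).
    2:{ unfold Rdiv. apply Rmult_le_pos. lra. left; apply Rinv_0_lt_compat, pow_lt; lra. }
    replace (10 * Rabs A * eps) with (Rabs A * eps * 10) by ring. apply Rmult_le_compat_l. apply Rmult_le_pos; lra.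
    apply (Rmult_le_reg_r (mu ^ 2)). apply pow_lt; lra. unfold Rdiv. rewrite Rmult_assoc, Rinv_l.
    simpl. nra. apply pow_nonzero; lra. }
  set (M := exp (T * A ^ 2 / 2)). set (tau := sqrt T).
  assert (HM : 0 < M) by apply exp_pos.
  assert (Htau : 0 < tau) by (apply sqrt_lt_R0; auto).
  set (Tm := T / eps ^ 2).
  assert (HRS : forall u, 0 <= u <= Tm -> 0 <= RS mu w u <= M).
  { intros u Hu. split. apply RS_nonneg; lra. eapply Rle_trans. apply RS_bound; lra. apply exp_le.
    assert (Hn : 0 <= Rmax 1 mu - 1 <= Rabs A * eps).
    { split. pose proof (Rmax_l 1 mu); lra. apply Rmax_case_strong; intros. lra.
      rewrite <- Hmu1. apply Rle_abs. }
    assert (Hn2 : (Rmax 1 mu - 1) ^ 2 <= A ^ 2 * eps ^ 2).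
    { replace (A ^ 2 * eps ^ 2) with ((Rabs A * eps) ^ 2) by (unfold Rabs; destruct Rcase_abs; ring).
      apply pow_incr; lra. }
    assert (Hue : u * eps ^ 2 <= T).
    { unfold Tm in Hu. assert (0 < eps ^ 2) by (apply pow_lt; lra).
      destruct Hu as [_ Hu]. apply (Rmult_le_compat_r (eps ^ 2)) in Hu; [|lra].
      unfold Rdiv in Hu. rewrite Rmult_assoc, Rinv_l in Hu; lra. }
    assert (0 <= (Rmax 1 mu - 1) ^ 2) by apply pow2_ge_0.
    apply Rle_trans with (u / 2 * (A ^ 2 * eps ^ 2)). apply Rmult_le_compat_l; lra.
    assert (0 <= A ^ 2) by apply pow2_ge_0.
    replace (u / 2 * (A ^ 2 * eps ^ 2)) with ((u * eps ^ 2) * A ^ 2 / 2) by field.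
    unfold Rdiv. apply Rmult_le_compat_r. lra. apply Rmult_le_compat_r; lra. }
  assert (Hsig : forall u, 0 < u <= Tm -> eps <= tau * / sqrt u).
  { intros u Hu. pose proof (sqrt_lt_R0 u ltac:(lra)).
    assert (Hue : eps ^ 2 * u <= T).
    { unfold Tm in Hu. assert (0 < eps ^ 2) by (apply pow_lt; lra).
      destruct Hu as [_ Hu]. apply (Rmult_le_compat_r (eps ^ 2)) in Hu; [|lra].
      unfold Rdiv in Hu. rewrite Rmult_assoc, Rinv_l in Hu; lra. }
    apply sqrt_le_1_alt in Hue. rewrite sqrt_mult_alt in Hue by (apply pow_le; lra).
    rewrite sqrt_pow2 in Hue by lra. fold tau in Hue.
    apply (Rmult_le_reg_r (sqrt u)); auto. rewrite Rmult_assoc, Rinv_l; lra. }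
  assert (HRS' : forall u, 0 <= u <= Tm ->
            Rabs (RS' mu w u) <= A ^ 2 * eps ^ 2 * M + 3 / 2 * Rabs (P u (S (w + 1)) - P u (w + 1)) + Rabs A * eps * P u (w + 2)).
  { intros u Hu. pose proof (RS'_formula mu w u Hmu2) as F.
    replace (RS' mu w u) with (/ 2 * ((mu - 1) ^ 2 / mu * RS mu w u + mu ^ 2 * (P u (w + 1) - P u (S (w + 1)))
             + (mu * (mu - 1)) * P u (w + 2))).
    2:{ replace (S (w + 1)) with (w + 2)%nat by lia. lra. }
    destruct (HRS u Hu) as [R0 R1].
    pose proof (P_nonneg u (w + 2) ltac:(lra)) as P0.
    assert (E1 : (mu - 1) ^ 2 = A ^ 2 * eps ^ 2).
    { replace ((mu - 1) ^ 2) with (Rabs (mu - 1) ^ 2) by (unfold Rabs; destruct Rcase_abs; ring).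
      rewrite Hmu1. replace (A ^ 2) with (Rabs A ^ 2) by (unfold Rabs; destruct Rcase_abs; ring). ring. }
    assert (B1 : 0 <= (mu - 1) ^ 2 / mu * RS mu w u <= 2 * (A ^ 2 * eps ^ 2 * M)).
    { rewrite E1. assert (0 <= A ^ 2 * eps ^ 2) by (apply Rmult_le_pos; apply pow2_ge_0).
      assert (0 < / mu <= 2). { split. apply Rinv_0_lt_compat; lra. rewrite <- (Rinv_inv 2). apply Rinv_le_contravar; lra. }
      unfold Rdiv. split. apply Rmult_le_pos; [apply Rmult_le_pos|]; lra.
      apply Rle_trans with ((A ^ 2 * eps ^ 2) * 2 * M). apply Rmult_le_compat; try lra.
      apply Rmult_le_pos; lra. apply Rmult_le_compat_l; lra. right; ring. }
    assert (B2 : Rabs (mu ^ 2 * (P u (w + 1) - P u (S (w + 1)))) <= 3 * Rabs (P u (S (w + 1)) - P u (w + 1))).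
    { rewrite Rabs_mult, Rabs_pos_eq by (apply pow_le; lra). rewrite <- Rabs_Ropp.
      replace (- (P u (w + 1) - P u (S (w + 1)))) with (P u (S (w + 1)) - P u (w + 1)) by ring.
      apply Rmult_le_compat_r. apply Rabs_pos. simpl; nra. }
    assert (B3 : Rabs (mu * (mu - 1) * P u (w + 2)) <= 2 * (Rabs A * eps * P u (w + 2))).
    { rewrite !Rabs_mult, Hmu1, (Rabs_pos_eq mu), (Rabs_pos_eq (P u _)) by lra.
      assert (0 <= Rabs A * eps) by (apply Rmult_le_pos; lra).
      replace (2 * (Rabs A * eps * P u (w + 2))) with (2 * (Rabs A * eps) * P u (w + 2)) by ring.
      apply Rmult_le_compat_r; auto. nra. }
    rewrite Rabs_mult, Rabs_pos_eq by lra.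
    eapply Rle_trans. apply Rmult_le_compat_l. lra. eapply Rle_trans. apply Rabs_triang.
    apply Rplus_le_compat. eapply Rle_trans. apply Rabs_triang. apply Rplus_le_compat.
    rewrite Rabs_pos_eq by lra. apply B1. apply B2. apply B3. lra. }
  assert (Hk : forall x, 0 <= x -> 0 <= 10 * Rabs A * x) by (intros; apply Rmult_le_pos; lra).
  set (Z := A ^ 2 * M + 3 + Rabs A + A ^ 2 * tau ^ 3 * M + 6 * tau + 2 * Rabs A * tau ^ 2).
  assert (HA2 : 0 <= A ^ 2) by apply pow2_ge_0.
  assert (HZ : 0 <= Z).
  { unfold Z. assert (0 <= A ^ 2 * M) by (apply Rmult_le_pos; lra).
    assert (0 <= A ^ 2 * tau ^ 3 * M) by (apply Rmult_le_pos; [apply Rmult_le_pos; [|apply pow_le]|]; lra).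
    assert (0 <= Rabs A * tau ^ 2) by (apply Rmult_le_pos; [|apply pow_le]; lra). lra. }
  assert (EK : KR A T = 10 * Rabs A * (M + M * tau + Z)) by (unfold KR, Z; fold M tau; f_equal; ring).
  apply (holder (fun u => c * RS mu w u) (fun u => c * RS' mu w u) (KR A T) Tm); auto; try lra.
  - rewrite EK. apply Hk. assert (0 <= M * tau) by (apply Rmult_le_pos; lra). lra.
  - intros u Hu. apply (derivable_pt_lim_scal (RS mu w) c u). apply RS_deriv; lra.
  - intros u Hu. destruct (HRS u Hu). rewrite Rabs_mult, (Rabs_pos_eq (RS _ _ _)) by lra.
    apply Rle_trans with ((10 * Rabs A * eps) * M). apply Rmult_le_compat; auto using Rabs_pos.
    rewrite EK. replace (10 * Rabs A * eps * M) with (10 * Rabs A * (eps * M)) by ring.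
    apply Rmult_le_compat_l. lra. assert (0 <= M * tau) by (apply Rmult_le_pos; lra). nra.
  - intros u Hu. assert (Hu' : 0 <= u <= Tm) by lra. destruct (HRS u Hu'). pose proof (Hsig u Hu).
    pose proof (sqrt_lt_R0 u ltac:(lra)). set (sg := / sqrt u) in *. assert (0 < sg) by (apply Rinv_0_lt_compat; lra).
    rewrite Rabs_mult, (Rabs_pos_eq (RS _ _ _)) by lra.
    apply Rle_trans with ((10 * Rabs A * eps) * M). apply Rmult_le_compat; auto using Rabs_pos.
    unfold Rdiv. fold sg. rewrite EK.
    apply Rle_trans with (10 * Rabs A * ((M * tau) * sg)).
    replace (10 * Rabs A * eps * M) with (10 * Rabs A * (eps * M)) by ring. apply Rmult_le_compat_l. lra.
    replace (M * tau * sg) with (M * (tau * sg)) by ring. rewrite Rmult_comm. apply Rmult_le_compat_l; lra.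
    replace (10 * Rabs A * (M + M * tau + Z) * sg) with (10 * Rabs A * ((M + M * tau + Z) * sg)) by ring.
    apply Rmult_le_compat_l. lra. apply Rmult_le_compat_r. lra.
    assert (0 <= M * tau) by (apply Rmult_le_pos; lra). lra.
  - intros u Hu. pose proof (HRS' u Hu).
    pose proof (P_grad1 u (w + 1) ltac:(lra)). pose proof (P_le1 u (w + 2) ltac:(lra)).
    pose proof (P_nonneg u (w + 2) ltac:(lra)).
    set (G := Rabs (P u (S (w + 1)) - P u (w + 1))) in *. set (P2 := P u (w + 2)) in *.
    assert (0 <= G) by apply Rabs_pos.
    rewrite Rabs_mult. eapply Rle_trans. apply Rmult_le_compat; [apply Rabs_pos|apply Rabs_pos|apply Hc|apply H].
    assert (E : 10 * Rabs A * eps * (A ^ 2 * eps ^ 2 * M + 3 / 2 * G + Rabs A * eps * P2) =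
              10 * Rabs A * (A ^ 2 * M * eps ^ 3 + 3 / 2 * (eps * G) + Rabs A * (eps ^ 2 * P2))) by ring.
    rewrite E, EK. apply Rmult_le_compat_l. lra.
    assert (e3 : eps ^ 3 <= 1) by (apply pow_le_one; lra).
    assert (e2 : eps ^ 2 <= 1) by (apply pow_le_one; lra).
    assert (eG : eps * G <= 2) by nra.
    assert (eP : eps ^ 2 * P2 <= 1) by (assert (0 <= eps ^ 2) by (apply pow_le; lra); nra).
    assert (0 <= M * tau) by (apply Rmult_le_pos; lra).
    assert (A ^ 2 * M * eps ^ 3 <= A ^ 2 * M) by (rewrite <- (Rmult_1_r (A ^ 2 * M)) at 2; apply Rmult_le_compat_l; [apply Rmult_le_pos|]; lra).
    assert (Rabs A * (eps ^ 2 * P2) <= Rabs A) by (rewrite <- (Rmult_1_r (Rabs A)) at 2; apply Rmult_le_compat_l; lra).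
    assert (0 <= A ^ 2 * tau ^ 3 * M) by (apply Rmult_le_pos; [apply Rmult_le_pos; [|apply pow_le]|]; lra).
    assert (0 <= Rabs A * tau ^ 2) by (apply Rmult_le_pos; [|apply pow_le]; lra).
    unfold Z. lra.
  - intros u Hu. assert (Hu' : 0 <= u <= Tm) by lra. pose proof (HRS' u Hu'). pose proof (Hsig u Hu).
    pose proof (sqrt_lt_R0 u ltac:(lra)). pose proof (sqrt_sqrt u ltac:(lra)) as Hsq.
    set (sg := / sqrt u) in *. assert (Hsg : 0 < sg) by (apply Rinv_0_lt_compat; lra).
    assert (Esg : / (u * sqrt u) = sg ^ 3).
    { unfold sg. rewrite <- Hsq at 1. simpl. field. lra. }
    assert (HG : Rabs (P u (S (w + 1)) - P u (w + 1)) <= 4 * sg ^ 2).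
    { eapply Rle_trans. apply P_grad2; lra. pose proof (inv_sqrt_half u ltac:(lra)) as Hi.
      assert (0 <= / sqrt (u / 2)) by (left; apply Rinv_0_lt_compat, sqrt_lt_R0; lra).
      unfold Rdiv in Hi. fold sg in Hi. apply Rle_trans with ((2 * sg) * (2 * sg)). apply Rmult_le_compat; lra.
      right; ring. }
    assert (HP2 : P u (w + 2) <= 2 * sg).
    { eapply Rle_trans. apply P_le_sqrt; lra. pose proof (inv_sqrt_half u ltac:(lra)) as Hi. unfold Rdiv in Hi. fold sg in Hi. lra. }
    pose proof (P_nonneg u (w + 2) ltac:(lra)).
    set (G := Rabs (P u (S (w + 1)) - P u (w + 1))) in *. set (P2 := P u (w + 2)) in *.
    assert (0 <= G) by apply Rabs_pos.
    rewrite Rabs_mult. eapply Rle_trans. apply Rmult_le_compat; [apply Rabs_pos|apply Rabs_pos|apply Hc|apply H].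
    assert (E : 10 * Rabs A * eps * (A ^ 2 * eps ^ 2 * M + 3 / 2 * G + Rabs A * eps * P2) =
              10 * Rabs A * (A ^ 2 * M * eps ^ 3 + 3 / 2 * (eps * G) + Rabs A * (eps ^ 2 * P2))) by ring.
    rewrite E, EK. unfold Rdiv. rewrite Esg.
    replace (10 * Rabs A * (M + M * tau + Z) * sg ^ 3) with (10 * Rabs A * ((M + M * tau + Z) * sg ^ 3)) by ring.
    apply Rmult_le_compat_l. lra.
    assert (Hts : 0 <= tau * sg) by (apply Rmult_le_pos; lra).
    assert (e3 : eps ^ 3 <= (tau * sg) ^ 3) by (apply pow_incr; lra).
    assert (e2 : eps ^ 2 <= (tau * sg) ^ 2) by (apply pow_incr; lra).
    assert (eG : eps * G <= (tau * sg) * (4 * sg ^ 2)) by (apply Rmult_le_compat; lra).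
    assert (eP : eps ^ 2 * P2 <= (tau * sg) ^ 2 * (2 * sg)) by (apply Rmult_le_compat; try lra; apply pow_le; lra).
    assert (T1 : A ^ 2 * M * eps ^ 3 <= A ^ 2 * M * (tau * sg) ^ 3) by (apply Rmult_le_compat_l; [apply Rmult_le_pos|]; lra).
    assert (T3 : Rabs A * (eps ^ 2 * P2) <= Rabs A * ((tau * sg) ^ 2 * (2 * sg))) by (apply Rmult_le_compat_l; lra).
    assert (0 <= M * tau) by (apply Rmult_le_pos; lra).
    assert (0 <= sg ^ 3) by (apply pow_le; lra).
    assert (Hfin : A ^ 2 * M * (tau * sg) ^ 3 + 3 / 2 * ((tau * sg) * (4 * sg ^ 2)) + Rabs A * ((tau * sg) ^ 2 * (2 * sg))
               = (A ^ 2 * tau ^ 3 * M + 6 * tau + 2 * Rabs A * tau ^ 2) * sg ^ 3) by field.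
    assert (Hz : (A ^ 2 * tau ^ 3 * M + 6 * tau + 2 * Rabs A * tau ^ 2) * sg ^ 3 <= (M + M * tau + Z) * sg ^ 3).
    { apply Rmult_le_compat_r; auto. assert (0 <= A ^ 2 * M) by (apply Rmult_le_pos; lra). unfold Z. lra. }
    lra.
Qed.

Lemma min1_pow_nonneg s v : 0 <= min1_pow s v.
Proof.
  unfold min1_pow. destruct (Rle_dec s 0). lra. apply Rmin_glb. lra. unfold Rpower. left; apply exp_pos.
Qed.

Theorem mainTheorem6 :
  forall (A T : R), 0 < T ->
  exists C : R, exists eps0 : R, 0 < eps0 /\
    forall eps : R, 0 < eps < eps0 ->
    forall s t : R, 0 <= s -> s < t -> t <= T / eps ^ 2 ->
    forall x y : nat, forall v : R, 0 <= v <= 1 ->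
      Rabs (robin A eps t x y - robin A eps s x y)
        <= C * min1_pow s v * Rpower (t - s) v.
Proof.
  intros A T HT.
  exists (16 + 32 + 2 * KR A T), (/ (2 * (Rabs A + 1))).
  assert (Ha : 0 <= Rabs A) by apply Rabs_pos.
  split. apply Rinv_0_lt_compat; lra.
  intros eps [He0 He1] s t Hs Hst HtT x y v Hv.
  assert (Hh : eps * (2 * (Rabs A + 1)) < 1).
  { apply (Rmult_lt_compat_r (2 * (Rabs A + 1))) in He1; [|lra]. rewrite Rinv_l in He1; lra. }
  assert (Heps1 : eps <= 1) by nra.
  assert (HAe : Rabs A * eps <= 1 / 2) by nra.
  assert (HAe' : Rabs (A * eps) = Rabs A * eps) by (rewrite Rabs_mult, (Rabs_pos_eq eps); lra).
  assert (Hmu : 1 / 2 <= muA A eps <= 3 / 2).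
  { rewrite <- HAe' in HAe. apply abs_bounds in HAe. unfold muA. lra. }
  rewrite !robin_eq by lra.
  set (mu := muA A eps) in *. set (a := Z.abs_nat (Z.of_nat x - Z.of_nat y)). set (c := 1 - / mu ^ 2).
  set (m := min1_pow s v). set (h := Rpower (t - s) v).
  assert (Hm : 0 <= m) by apply min1_pow_nonneg.
  assert (Hhh : 0 <= h) by (unfold h, Rpower; left; apply exp_pos).
  pose proof (P_component a (T / eps ^ 2) s t v Hs Hst HtT Hv) as H1.
  pose proof (P_component (x + y + 1) (T / eps ^ 2) s t v Hs Hst HtT Hv) as H2.
  pose proof (R_component A T eps (x + y) s t v HT ltac:(lra) HAe Hs Hst HtT Hv) as H3.
  fold mu c m h in H1, H2, H3.
  replace (P t a + mu * P t (x + y + 1) + c * RS mu (x + y) t - (P s a + mu * P s (x + y + 1) + c * RS mu (x + y) s))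
    with ((P t a - P s a) + mu * (P t (x + y + 1) - P s (x + y + 1)) + (c * RS mu (x + y) t - c * RS mu (x + y) s)) by ring.
  eapply Rle_trans. apply Rabs_triang. eapply Rle_trans. apply Rplus_le_compat_r. apply Rabs_triang.
  rewrite Rabs_mult, (Rabs_pos_eq mu) by lra.
  assert (0 <= m * h) by (apply Rmult_le_pos; auto).
  assert (mu * Rabs (P t (x + y + 1) - P s (x + y + 1)) <= 2 * (2 * 8 * m * h)).
  { apply Rmult_le_compat; try lra. apply Rabs_pos. }
  replace ((16 + 32 + 2 * KR A T) * m * h) with (2 * 8 * m * h + 2 * (2 * 8 * m * h) + 2 * KR A T * m * h) by ring.
  lra.
Qed.
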